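(* Let $B$ be the open unit ball of $\mathbb{C}^n$ for a norm $\|\cdot\|$ and let $f:\Delta\to\mathbb{C}^n$ be a holomorphic map with $f(\Delta)\subset\overline B$. Then $\|f(0)+\zeta(f(z)-f(0))\|\le 1$ for every $z\in\Delta\setminus\{0\}$ and every $\zeta\in\mathbb{C}$ with $|\zeta|\le\frac{1-|z|}{2|z|}$.
   Context: $\Delta$ is the open unit disc of $\mathbb{C}$. *)

(* Defs.v *)
From Stdlib Require Import Reals.
From Stdlib Require Fin.
From Coquelicot Require Export Coquelicot.
Open Scope R_scope.

Definition Cn (n : nat) := Fin.t n -> C.

Definition vadd {n} (x y : Cn n) : Cn n := fun i => Cplus (x i) (y i).
Definition vscal {n} (c : C) (x : Cn n) : Cn n := fun i => Cmult c (x i).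
Definition vsub {n} (x y : Cn n) : Cn n := fun i => Cminus (x i) (y i).

Definition is_norm {n} (N : Cn n -> R) : Prop :=
  (forall x, 0 <= N x) /\
  (forall x, N x = 0 -> forall i, x i = 0%C) /\
  (forall (c : C) x, N (vscal c x) = Cmod c * N x) /\
  (forall x y, N (vadd x y) <= N x + N y).

Definition in_disc (z : C) : Prop := Cmod z < 1.

Definition holomorphic_on_disc {n} (f : C -> Cn n) : Prop :=
  forall (i : Fin.t n) (z : C), in_disc z ->
    ex_derive (K := C_AbsRing) (V := C_NormedModule) (fun w => f w i) z.

(* Main.v *)
Require Import Defs.
From Stdlib Require Import Reals Lra Psatz ClassicalEpsilon FunctionalExtensionality List.
From Stdlib Require Fin.
From Coquelicot Require Import Coquelicot.
Open Scope R_scope.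

Lemma C_eq (a b c d : R) : a = c -> b = d -> (a, b) = (c, d) :> C.
Proof. intros; subst; auto. Qed.

Lemma Cmod_ge_Re (z : C) : Rabs (fst z) <= Cmod z.
Proof. destruct z as [a b]. pose proof (Rmax_Cmod (a,b)). simpl in *.
  eapply Rle_trans; [apply Rmax_l|exact H]. Qed.
Lemma Cmod_ge_Im (z : C) : Rabs (snd z) <= Cmod z.
Proof. destruct z as [a b]. pose proof (Rmax_Cmod (a,b)). simpl in *.
  eapply Rle_trans; [apply Rmax_r|exact H]. Qed.
Lemma Cmod_le_sum (z : C) : Cmod z <= Rabs (fst z) + Rabs (snd z).
Proof. destruct z as [a b]. unfold Cmod; simpl.
  apply Rsqr_incr_0_var. rewrite Rsqr_sqrt by nra. unfold Rsqr.
  pose proof (Rabs_pos a); pose proof (Rabs_pos b).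
  assert (Rabs a * Rabs a = a * a) by (rewrite <- Rabs_mult; apply Rabs_right; nra).
  assert (Rabs b * Rabs b = b * b) by (rewrite <- Rabs_mult; apply Rabs_right; nra).
  nra. pose proof (Rabs_pos a); pose proof (Rabs_pos b); lra. Qed.

Lemma Cmod_minus_sym (a b : C) : Cmod (a - b) = Cmod (b - a).
Proof. rewrite <- Cmod_opp. f_equal. ring. Qed.

Lemma Cmod_triangle_minus (a b : C) : Cmod a - Cmod b <= Cmod (a - b).
Proof. pose proof (Cmod_triangle (a - b) b). replace (a - b + b)%C with a in H by ring. lra. Qed.

Lemma Cmod_RtoC_mult (r : R) (z : C) : Cmod (RtoC r * z) = Rabs r * Cmod z.
Proof. rewrite Cmod_mult, Cmod_R. auto. Qed.

Definition ee (y : R) : C := (cos y, sin y).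
Lemma Cmod_ee y : Cmod (ee y) = 1.
Proof. unfold Cmod, ee; simpl. replace (cos y * (cos y * 1) + sin y * (sin y * 1)) with 1. apply sqrt_1.
  pose proof (sin2_cos2 y). unfold Rsqr in H. nra. Qed.

Lemma sin_lip a b : Rabs (sin b - sin a) <= Rabs (b - a).
Proof. destruct (MVT_abs sin cos a b) as [c [Hc _]].
  intros; apply derivable_pt_lim_sin. rewrite Hc.
  pose proof (COS_bound c). assert (Rabs (cos c) <= 1) by (apply Rabs_le; lra).
  pose proof (Rabs_pos (b - a)). nra. Qed.
Lemma cos_lip a b : Rabs (cos b - cos a) <= Rabs (b - a).
Proof. destruct (MVT_abs cos (fun x => - sin x) a b) as [c [Hc _]].
  intros; apply derivable_pt_lim_cos. rewrite Hc.
  pose proof (SIN_bound c). assert (Rabs (- sin c) <= 1) by (rewrite Rabs_Ropp; apply Rabs_le; lra).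
  pose proof (Rabs_pos (b - a)). nra. Qed.
Lemma ee_lip a b : Cmod (ee b - ee a) <= 2 * Rabs (b - a).
Proof. eapply Rle_trans. apply Cmod_le_sum. unfold ee; simpl.
  pose proof (sin_lip a b); pose proof (cos_lip a b).
  replace (cos b + - cos a) with (cos b - cos a) by ring.
  replace (sin b + - sin a) with (sin b - sin a) by ring. lra. Qed.

Lemma Rdiv_le_0_compat (a b : R) : 0 <= a -> 0 < b -> 0 <= a / b.
Proof. intros. unfold Rdiv. apply Rmult_le_pos; auto. left; apply Rinv_0_lt_compat; auto. Qed.

Lemma nested_pt (a b : nat -> R) :
  (forall k, a k <= a (S k)) -> (forall k, b (S k) <= b k) -> (forall k, a k <= b k) ->
  exists x, forall k, a k <= x <= b k.
Proof.
  intros Ha Hb Hab.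
  assert (Ma : forall j k, (j <= k)%nat -> a j <= a k).
  { intros j k H; induction H; [lra| specialize (Ha m); lra]. }
  assert (Mb : forall j k, (j <= k)%nat -> b k <= b j).
  { intros j k H; induction H; [lra| specialize (Hb m); lra]. }
  assert (Hjk : forall j k, a j <= b k).
  { intros j k. destruct (Nat.le_ge_cases j k) as [H|H].
    - specialize (Ma _ _ H); specialize (Hab k); lra.
    - specialize (Mb _ _ H); specialize (Hab j); lra. }
  destruct (completeness (fun x => exists k, x = a k)) as [x [Hx1 Hx2]].
  - exists (b 0%nat). intros y [k ->]. apply Hjk.
  - exists (a 0%nat); eauto.
  - exists x. intros k; split.
    + apply Hx1; eauto.
    + apply Hx2. intros y [j ->]. apply Hjk.
Qed.

Lemma pow2_large (M del : R) : 0 < del -> exists k : nat, M / 2 ^ k < del.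
Proof.
  intros Hd.
  assert (H2 : forall k, INR k + 1 <= 2 ^ k).
  { induction k. simpl; lra. rewrite S_INR. simpl pow. pose proof (pos_INR k). lra. }
  destruct (INR_archimed del M) as [k Hk]; [lra|].
  exists k. specialize (H2 k). assert (0 < 2 ^ k) by (apply pow_lt; lra).
  apply (Rmult_lt_reg_r (2 ^ k)); auto. unfold Rdiv. rewrite Rmult_assoc, Rinv_l by lra.
  rewrite Rmult_1_r. nra.
Qed.

Record quad := Qd { qa : R; qb : R; qc : R; qd : R }.

Section Cousin.
Variable Pr : R -> R -> R -> R -> Prop.
Let Pq (q : quad) := Pr (qa q) (qb q) (qc q) (qd q).

Definition qstep (q : quad) : quad :=
  let a := qa q in let b := qb q in let c := qc q in let d := qd q in
  let m := (a + b) / 2 in let m' := (c + d) / 2 in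
  if excluded_middle_informative (Pr a m c m') then
    if excluded_middle_informative (Pr m b c m') then
      if excluded_middle_informative (Pr a m m' d) then Qd m b m' d
      else Qd a m m' d
    else Qd m b c m'
  else Qd a m c m'.

Lemma qstep_spec q :
  let q' := qstep q in
  let m := (qa q + qb q) / 2 in let m' := (qc q + qd q) / 2 in
  (qa q' = qa q /\ qb q' = m \/ qa q' = m /\ qb q' = qb q) /\
  (qc q' = qc q /\ qd q' = m' \/ qc q' = m' /\ qd q' = qd q) /\
  ((forall a b c d, Pr a ((a+b)/2) c ((c+d)/2) -> Pr ((a+b)/2) b c ((c+d)/2) ->
     Pr a ((a+b)/2) ((c+d)/2) d -> Pr ((a+b)/2) b ((c+d)/2) d -> Pr a b c d) ->
   ~ Pq q -> ~ Pq q').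
Proof.
  unfold qstep. simpl.
  destruct (excluded_middle_informative _); [destruct (excluded_middle_informative _); [destruct (excluded_middle_informative _)|]|];
  simpl; (split; [tauto|split;[tauto|]]); unfold Pq; simpl; intros Hc HQ HP; apply HQ; apply Hc; auto;
  exfalso; auto.
Qed.
End Cousin.

Lemma cousin2 (Pr : R -> R -> R -> R -> Prop) (a0 b0 c0 d0 : R) :
  a0 < b0 -> c0 < d0 ->
  (forall a b c d, Pr a ((a+b)/2) c ((c+d)/2) -> Pr ((a+b)/2) b c ((c+d)/2) ->
     Pr a ((a+b)/2) ((c+d)/2) d -> Pr ((a+b)/2) b ((c+d)/2) d -> Pr a b c d) ->
  (forall x y, a0 <= x <= b0 -> c0 <= y <= d0 -> exists del, 0 < del /\
     forall a b c d, a0 <= a -> b <= b0 -> c0 <= c -> d <= d0 ->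
       a <= x <= b -> c <= y <= d -> b - a < del -> d - c < del ->
       (b - a) * (d0 - c0) = (d - c) * (b0 - a0) -> Pr a b c d) ->
  Pr a0 b0 c0 d0.
Proof.
  intros Hab Hcd Hcomb Hloc.
  destruct (classic (Pr a0 b0 c0 d0)) as [H|H]; auto. exfalso.
  set (s := fix s k := match k with O => Qd a0 b0 c0 d0 | S k => qstep Pr (s k) end).
  assert (Hs : forall k, qb (s k) - qa (s k) = (b0 - a0) / 2 ^ k /\
                         qd (s k) - qc (s k) = (d0 - c0) / 2 ^ k /\
                         ~ Pr (qa (s k)) (qb (s k)) (qc (s k)) (qd (s k))).
  { induction k.
    - simpl. split; [field|split;[field|auto]].
    - destruct IHk as [E1 [E2 E3]]. simpl (s (S k)).
      destruct (qstep_spec Pr (s k)) as [S1 [S2 S3]].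
      split; [|split]. 
      + replace ((b0 - a0) / 2 ^ S k) with (((b0 - a0) / 2 ^ k) / 2)
          by (simpl pow; field; apply pow_nonzero; lra).
        rewrite <- E1. destruct S1 as [[-> ->]|[-> ->]]; lra.
      + replace ((d0 - c0) / 2 ^ S k) with (((d0 - c0) / 2 ^ k) / 2)
          by (simpl pow; field; apply pow_nonzero; lra).
        rewrite <- E2. destruct S2 as [[-> ->]|[-> ->]]; lra.
      + apply S3; auto. }
  assert (Hpos : forall k, 0 < 2 ^ k) by (intros; apply pow_lt; lra).
  assert (Hmono : forall k, qa (s k) <= qa (s (S k)) /\ qb (s (S k)) <= qb (s k) /\
                            qc (s k) <= qc (s (S k)) /\ qd (s (S k)) <= qd (s k)).
  { intros k. simpl (s (S k)). destruct (qstep_spec Pr (s k)) as [S1 [S2 _]].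
    destruct (Hs k) as [E1 [E2 _]].
    assert (0 <= (b0 - a0) / 2 ^ k) by (apply Rdiv_le_0_compat; [lra|apply Hpos]).
    assert (0 <= (d0 - c0) / 2 ^ k) by (apply Rdiv_le_0_compat; [lra|apply Hpos]).
    destruct S1 as [[-> ->]|[-> ->]]; destruct S2 as [[-> ->]|[-> ->]]; lra. }
  assert (Hle : forall k, qa (s k) <= qb (s k) /\ qc (s k) <= qd (s k)).
  { intros k. destruct (Hs k) as [E1 [E2 _]].
    assert (0 <= (b0 - a0) / 2 ^ k) by (apply Rdiv_le_0_compat; [lra|apply Hpos]).
    assert (0 <= (d0 - c0) / 2 ^ k) by (apply Rdiv_le_0_compat; [lra|apply Hpos]). lra. }
  destruct (nested_pt (fun k => qa (s k)) (fun k => qb (s k))) as [x Hx];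
    try (intros k; apply Hmono); try (intros k; apply Hle).
  destruct (nested_pt (fun k => qc (s k)) (fun k => qd (s k))) as [y Hy];
    try (intros k; apply Hmono); try (intros k; apply Hle).
  assert (Hbnd : forall k, a0 <= qa (s k) /\ qb (s k) <= b0 /\ c0 <= qc (s k) /\ qd (s k) <= d0).
  { induction k. simpl; lra. specialize (Hmono k). lra. }
  destruct (Hloc x y) as [del [Hdel Hl]].
  { specialize (Hx 0%nat); simpl in Hx; lra. }
  { specialize (Hy 0%nat); simpl in Hy; lra. }
  destruct (pow2_large (b0 - a0) del Hdel) as [k1 Hk1].
  destruct (pow2_large (d0 - c0) del Hdel) as [k2 Hk2].
  set (k := (k1 + k2)%nat).
  assert (Hk : forall M j, 0 <= M -> (j <= k)%nat -> M / 2 ^ k <= M / 2 ^ j).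
  { intros M j HM Hj. unfold Rdiv. apply Rmult_le_compat_l; auto.
    apply Rinv_le_contravar. apply Hpos. apply Rle_pow; [lra|auto]. }
  destruct (Hs k) as [E1 [E2 E3]]. apply E3.
  specialize (Hbnd k). specialize (Hx k). specialize (Hy k). simpl in Hx, Hy.
  apply Hl; try lra.
  - rewrite E1. eapply Rle_lt_trans; [apply Hk|exact Hk1]; unfold k; lia || lra.
  - rewrite E2. eapply Rle_lt_trans; [apply Hk|exact Hk2]; unfold k; lia || lra.
  - rewrite E1, E2. field. apply pow_nonzero; lra.
Qed.

Definition cdiff (g : C -> C) (p : C) : Prop :=
  exists D : C, forall eps, 0 < eps -> exists del, 0 < del /\
    forall w, Cmod (w - p) < del -> Cmod (g w - g p - D * (w - p)) <= eps * Cmod (w - p).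

Lemma cdiff_of_ex_derive (g : C -> C) p :
  ex_derive (K := C_AbsRing) (V := C_NormedModule) g p -> cdiff g p.
Proof.
  intros [D [_ HD]]. exists D. intros eps Heps.
  specialize (HD p (fun P H => H)).
  destruct (HD (mkposreal eps Heps)) as [del Hdel].
  exists del. split. apply cond_pos. intros w Hw.
  specialize (Hdel w). simpl in Hdel.
  assert (Hb : ball p del w).
  { change (abs (minus w p) < del). unfold abs, minus, plus, opp; simpl. exact Hw. }
  specialize (Hdel Hb).
  change (Cmod (g w - g p - (w - p) * D) <= eps * Cmod (w - p)) in Hdel.
  replace (D * (w - p))%C with ((w - p) * D)%C by ring. exact Hdel.
Qed.

Lemma cdiff_cont g p : cdiff g p -> forall eps, 0 < eps -> exists del, 0 < del /\
  forall w, Cmod (w - p) < del -> Cmod (g w - g p) <= eps.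
Proof.
  intros [D HD] eps Heps. destruct (HD 1 Rlt_0_1) as [d1 [Hd1 H1]].
  pose proof (Cmod_ge_0 D).
  exists (Rmin d1 (eps / (Cmod D + 1))). split.
  { apply Rmin_pos; auto. apply Rdiv_lt_0_compat; lra. }
  intros w Hw. pose proof (Rmin_l d1 (eps / (Cmod D + 1))). pose proof (Rmin_r d1 (eps / (Cmod D + 1))).
  specialize (H1 w ltac:(lra)).
  replace (g w - g p)%C with ((g w - g p - D * (w - p)) + D * (w - p))%C by ring.
  eapply Rle_trans. apply Cmod_triangle. rewrite Cmod_mult.
  pose proof (Cmod_ge_0 (w - p)).
  assert (Cmod (w - p) * (Cmod D + 1) <= eps).
  { assert (X : Cmod (w - p) <= eps / (Cmod D + 1)) by lra.
    apply (Rmult_le_compat_r (Cmod D + 1)) in X; [|lra].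
    unfold Rdiv in X. rewrite Rmult_assoc, Rinv_l in X by lra. lra. }
  nra.
Qed.

Lemma cdiff_const (k : C) p : cdiff (fun _ => k) p.
Proof. exists 0%C. intros eps Heps. exists 1. split; [lra|]. intros w _. cbv beta.
  replace (k - k - 0 * (w - p))%C with (RtoC 0) by ring. rewrite Cmod_0.
  pose proof (Cmod_ge_0 (w - p)). nra. Qed.

Lemma cdiff_id p : cdiff (fun w => w) p.
Proof. exists 1%C. intros eps Heps. exists 1. split; [lra|]. intros w _. cbv beta.
  replace (w - p - 1 * (w - p))%C with (RtoC 0) by ring. rewrite Cmod_0.
  pose proof (Cmod_ge_0 (w - p)). nra. Qed.

Lemma cdiff_mult g1 g2 p : cdiff g1 p -> cdiff g2 p -> cdiff (fun w => g1 w * g2 w)%C p.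
Proof.
  intros H1 H2. pose proof (cdiff_cont _ _ H2) as C2.
  destruct H1 as [D1 HD1]. destruct H2 as [D2 HD2].
  exists (D1 * g2 p + g1 p * D2)%C. intros eps Heps.
  pose proof (Cmod_ge_0 D1). pose proof (Cmod_ge_0 (g1 p)). pose proof (Cmod_ge_0 (g2 p)).
  set (A := Cmod (g2 p) + 1). set (B := Cmod D1 + 1). set (G := Cmod (g1 p) + 1).
  destruct (HD1 (eps / (3 * A))) as [d1 [Hd1 E1]]. apply Rdiv_lt_0_compat; unfold A; lra.
  destruct (HD2 (eps / (3 * G))) as [d2 [Hd2 E2]]. apply Rdiv_lt_0_compat; unfold G; lra.
  destruct (C2 1 Rlt_0_1) as [d3 [Hd3 E3]].
  destruct (C2 (eps / (3 * B))) as [d4 [Hd4 E4]]. apply Rdiv_lt_0_compat; unfold B; lra.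
  exists (Rmin (Rmin d1 d2) (Rmin d3 d4)). split.
  { repeat apply Rmin_pos; auto. }
  intros w Hw. cbv beta.
  assert (Hw1 : Cmod (w - p) < d1). { eapply Rlt_le_trans; [exact Hw|]. eapply Rle_trans; apply Rmin_l. }
  assert (Hw2 : Cmod (w - p) < d2). { eapply Rlt_le_trans; [exact Hw|]. eapply Rle_trans; [apply Rmin_l|apply Rmin_r]. }
  assert (Hw3 : Cmod (w - p) < d3). { eapply Rlt_le_trans; [exact Hw|]. eapply Rle_trans; [apply Rmin_r|apply Rmin_l]. }
  assert (Hw4 : Cmod (w - p) < d4). { eapply Rlt_le_trans; [exact Hw|]. eapply Rle_trans; apply Rmin_r. }
  specialize (E1 w Hw1). specialize (E2 w Hw2). specialize (E3 w Hw3). specialize (E4 w Hw4).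
  set (h := (w - p)%C) in *.
  replace (g1 w * g2 w - g1 p * g2 p - (D1 * g2 p + g1 p * D2) * h)%C with
    ((g1 w - g1 p - D1 * h) * g2 w + D1 * h * (g2 w - g2 p) + g1 p * (g2 w - g2 p - D2 * h))%C
    by (unfold h; ring).
  pose proof (Cmod_ge_0 h).
  assert (Hg2 : Cmod (g2 w) <= A).
  { unfold A. replace (g2 w) with (g2 p + (g2 w - g2 p))%C by ring.
    eapply Rle_trans; [apply Cmod_triangle|lra]. }
  eapply Rle_trans. apply Cmod_triangle. eapply Rle_trans. apply Rplus_le_compat_r. apply Cmod_triangle.
  rewrite !Cmod_mult.
  pose proof (Cmod_ge_0 (g2 w)). pose proof (Cmod_ge_0 (g1 w - g1 p - D1 * h)).
  pose proof (Cmod_ge_0 (g2 w - g2 p)). pose proof (Cmod_ge_0 (g2 w - g2 p - D2 * h)).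
  assert (T1 : Cmod (g1 w - g1 p - D1 * h) * Cmod (g2 w) <= eps / 3 * Cmod h).
  { eapply Rle_trans. apply Rmult_le_compat; eauto. 
    replace (eps / (3 * A) * Cmod h * A) with (eps / 3 * Cmod h). lra. field. unfold A; lra. }
  assert (F4 : 0 <= eps / (3 * B)) by (apply Rdiv_le_0_compat; [lra|unfold B; lra]).
  assert (F2 : 0 <= eps / (3 * G)) by (apply Rdiv_le_0_compat; [lra|unfold G; lra]).
  assert (K4 : Cmod D1 * (eps / (3 * B)) <= eps / 3).
  { replace (eps / 3) with (B * (eps / (3 * B))) by (field; unfold B; lra).
    apply Rmult_le_compat_r; auto. unfold B; lra. }
  assert (K2 : Cmod (g1 p) * (eps / (3 * G)) <= eps / 3).
  { replace (eps / 3) with (G * (eps / (3 * G))) by (field; unfold G; lra).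
    apply Rmult_le_compat_r; auto. unfold G; lra. }
  assert (T2 : Cmod D1 * Cmod h * Cmod (g2 w - g2 p) <= eps / 3 * Cmod h).
  { assert (Cmod D1 * Cmod (g2 w - g2 p) <= eps / 3).
    { eapply Rle_trans; [|exact K4]. apply Rmult_le_compat_l; auto. }
    nra. }
  assert (T3 : Cmod (g1 p) * Cmod (g2 w - g2 p - D2 * h) <= eps / 3 * Cmod h).
  { eapply Rle_trans. apply Rmult_le_compat_l; auto. exact E2. nra. }
  lra.
Qed.

Lemma cdiff_inv_aff (al be p : C) : (al + be * p)%C <> 0%C ->
  cdiff (fun w => / (al + be * w))%C p.
Proof.
  intros Hu. set (u := (al + be * p)%C) in *.
  exists (- be / (u * u))%C. intros eps Heps.
  pose proof (Cmod_gt_0 u) as [Hu0 _]. specialize (Hu0 Hu).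
  pose proof (Cmod_ge_0 be).
  set (d := Rmin (Cmod u / (2 * (Cmod be + 1))) (eps * (Cmod u * Cmod u * Cmod u) / (2 * (Cmod be * Cmod be) + 1))).
  exists d. split.
  { apply Rmin_pos; apply Rdiv_lt_0_compat; try nra. repeat apply Rmult_lt_0_compat; auto. }
  intros w Hw. cbv beta. set (h := (w - p)%C) in *. pose proof (Cmod_ge_0 h).
  assert (Hh1 : Cmod h <= Cmod u / (2 * (Cmod be + 1))) by (pose proof (Rmin_l (Cmod u / (2 * (Cmod be + 1))) (eps * (Cmod u * Cmod u * Cmod u) / (2 * (Cmod be * Cmod be) + 1))); fold d in H1; lra).
  assert (Hh2 : Cmod h <= eps * (Cmod u * Cmod u * Cmod u) / (2 * (Cmod be * Cmod be) + 1)) by (pose proof (Rmin_r (Cmod u / (2 * (Cmod be + 1))) (eps * (Cmod u * Cmod u * Cmod u) / (2 * (Cmod be * Cmod be) + 1))); fold d in H1; lra).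
  set (v := (al + be * w)%C).
  assert (Hv : (v = u + be * h)%C) by (unfold v, u, h; ring).
  assert (Hbh : Cmod be * Cmod h <= Cmod u / 2).
  { apply (Rmult_le_compat_l (Cmod be)) in Hh1; auto.
    eapply Rle_trans; [exact Hh1|]. 
    apply (Rmult_le_reg_r (2 * (Cmod be + 1))). lra.
    unfold Rdiv. field_simplify; [|lra]. nra. }
  assert (Hvm : Cmod u / 2 <= Cmod v).
  { rewrite Hv. pose proof (Cmod_triangle_minus u (- (be * h))%C).
    rewrite Cmod_opp, Cmod_mult in H1. replace (u - - (be * h))%C with (u + be * h)%C in H1 by ring. lra. }
  assert (Hv0 : v <> 0%C). { intro E. rewrite E, Cmod_0 in Hvm. lra. }
  fold u. replace (/ v - / u - - be / (u * u) * h)%C with (be * be * h * h / (u * u * v))%C.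
  2:{ rewrite Hv. field. split; auto. rewrite <- Hv. auto. }
  rewrite Cmod_div. 2:{ repeat apply Cmult_neq_0; auto. }
  rewrite !Cmod_mult.
  apply (Rmult_le_reg_r (Cmod u * Cmod u * Cmod v)). repeat apply Rmult_lt_0_compat; lra.
  unfold Rdiv. rewrite Rmult_assoc, Rinv_l. 2:{ assert (0 < Cmod u * Cmod u * Cmod v) by (repeat apply Rmult_lt_0_compat; lra). lra. }
  rewrite Rmult_1_r.
  assert (Cmod be * Cmod be * Cmod h <= eps * (Cmod u * Cmod u * Cmod u) / 2).
  { apply (Rmult_le_compat_r (2 * (Cmod be * Cmod be) + 1)) in Hh2; [|nra].
    unfold Rdiv in Hh2. rewrite Rmult_assoc, Rinv_l in Hh2 by nra. nra. }
  assert (0 <= Cmod be * Cmod be) by nra.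
  assert (0 < Cmod u * Cmod u) by nra.
  assert (W : eps * (Cmod u * Cmod u * Cmod u) / 2 <= eps * (Cmod u * Cmod u * Cmod v)).
  { unfold Rdiv. rewrite (Rmult_comm eps), (Rmult_comm eps). rewrite !Rmult_assoc.
    apply Rmult_le_compat_l; [lra|]. apply Rmult_le_compat_l; [lra|].
    assert (0 <= Cmod u * eps) by nra. nra. }
  assert (W2 : Cmod be * Cmod be * Cmod h <= eps * (Cmod u * Cmod u * Cmod v)) by lra.
  apply (Rmult_le_compat_r (Cmod h)) in W2; auto. lra.
Qed.

Notation CR := C_R_CompleteNormedModule.
Definition CInt (f : R -> C) (a b : R) : C := @RInt CR f a b.

Lemma norm_CR (x : C) : @norm R_AbsRing CR x = Cmod x.
Proof. destruct x as [a b]. unfold norm; simpl. unfold prod_norm, Cmod; simpl.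
  f_equal. change (norm a) with (Rabs a). change (norm b) with (Rabs b).
  rewrite !Rmult_1_r, <- !Rabs_mult, !Rabs_right; try nra. Qed.

Definition rcont (h : R -> C) (t : R) := forall eps, 0 < eps -> exists del, 0 < del /\
  forall s, Rabs (s - t) < del -> Cmod (h s - h t) < eps.

Lemma rcont_continuous (h : R -> C) t : rcont h t -> @continuous R_UniformSpace CR h t.
Proof.
  intros H. unfold continuous. apply filterlim_locally. intros eps.
  destruct (H eps (cond_pos eps)) as [d [Hd Hs]].
  exists (mkposreal d Hd). intros s Hsd. specialize (Hs s Hsd).
  split; [change (Rabs (fst (h s) - fst (h t)) < eps)|change (Rabs (snd (h s) - snd (h t)) < eps)].
  - eapply Rle_lt_trans; [|exact Hs]. pose proof (Cmod_ge_Re (h s - h t)). simpl in H0. exact H0.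
  - eapply Rle_lt_trans; [|exact Hs]. pose proof (Cmod_ge_Im (h s - h t)). simpl in H0. exact H0.
Qed.

Lemma rcont_exRInt (h : R -> C) a b : a <= b -> (forall t, a <= t <= b -> rcont h t) ->
  @ex_RInt CR h a b.
Proof. intros Hab H. apply ex_RInt_continuous. intros z Hz.
  rewrite Rmin_left, Rmax_right in Hz by lra. apply rcont_continuous, H, Hz. Qed.

Lemma rcont_mult h1 h2 t : rcont h1 t -> rcont h2 t -> rcont (fun s => h1 s * h2 s)%C t.
Proof.
  intros H1 H2 eps Heps.
  set (M1 := Cmod (h1 t) + 1). set (M2 := Cmod (h2 t) + 1).
  pose proof (Cmod_ge_0 (h1 t)). pose proof (Cmod_ge_0 (h2 t)).
  destruct (H1 (Rmin 1 (eps / (2 * M2)))) as [d1 [Hd1 E1]].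
  { apply Rmin_pos; [lra|apply Rdiv_lt_0_compat; unfold M2; lra]. }
  destruct (H2 (eps / (2 * M1 + 1))) as [d2 [Hd2 E2]].
  { apply Rdiv_lt_0_compat; unfold M1; lra. }
  exists (Rmin d1 d2). split. apply Rmin_pos; auto. intros s Hs.
  specialize (E1 s (Rlt_le_trans _ _ _ Hs (Rmin_l _ _))).
  specialize (E2 s (Rlt_le_trans _ _ _ Hs (Rmin_r _ _))).
  replace (h1 s * h2 s - h1 t * h2 t)%C with (h1 s * (h2 s - h2 t) + (h1 s - h1 t) * h2 t)%C by ring.
  eapply Rle_lt_trans. apply Cmod_triangle. rewrite !Cmod_mult.
  assert (Hh1 : Cmod (h1 s) <= M1).
  { unfold M1. replace (h1 s) with (h1 t + (h1 s - h1 t))%C by ring.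
    eapply Rle_trans. apply Cmod_triangle. pose proof (Rmin_l 1 (eps / (2 * M2))). lra. }
  pose proof (Cmod_ge_0 (h1 s)). pose proof (Cmod_ge_0 (h2 s - h2 t)). pose proof (Cmod_ge_0 (h1 s - h1 t)).
  assert (X1 : Cmod (h1 s) * Cmod (h2 s - h2 t) <= M1 * (eps / (2 * M1 + 1))).
  { apply Rmult_le_compat; auto; lra. }
  assert (X2 : M1 * (eps / (2 * M1 + 1)) < eps / 2).
  { unfold Rdiv. apply (Rmult_lt_reg_r (2 * M1 + 1)). unfold M1; lra.
    rewrite Rmult_assoc, (Rmult_assoc eps), Rinv_l by (unfold M1; lra).
    replace (eps * / 2 * (2 * M1 + 1)) with (eps * M1 + eps / 2) by field. unfold M1 in *; nra. }
  assert (X3 : Cmod (h1 s - h1 t) * Cmod (h2 t) <= eps / (2 * M2) * M2).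
  { apply Rmult_le_compat; auto. pose proof (Rmin_r 1 (eps / (2 * M2))). lra. unfold M2; lra. }
  replace (eps / (2 * M2) * M2) with (eps / 2) in X3 by (field; unfold M2; lra).
  lra.
Qed.

Lemma rcont_const (k : C) t : rcont (fun _ => k) t.
Proof. intros eps Heps. exists 1. split; [lra|]. intros s _.
  replace (k - k)%C with (RtoC 0) by ring. rewrite Cmod_0. lra. Qed.

Lemma rcont_comp (g : C -> C) (phi : R -> C) t L :
  0 < L -> (forall s, Cmod (phi s - phi t) <= L * Rabs (s - t)) ->
  (forall eps, 0 < eps -> exists del, 0 < del /\ forall w, Cmod (w - phi t) < del -> Cmod (g w - g (phi t)) <= eps) ->
  rcont (fun s => g (phi s)) t.
Proof.
  intros HL Hphi Hg eps Heps. destruct (Hg (eps/2)) as [d [Hd E]]. lra.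
  exists (d / L). split. apply Rdiv_lt_0_compat; auto. intros s Hs.
  assert (Cmod (g (phi s) - g (phi t)) <= eps / 2).
  { apply E. eapply Rle_lt_trans. apply Hphi.
    apply (Rmult_lt_compat_l L) in Hs; auto. replace (L * (d / L)) with d in Hs by (field; lra). lra. }
  lra.
Qed.

Lemma rcont_ee t : rcont ee t.
Proof. intros eps Heps. exists (eps / 2). split. lra. intros s Hs.
  eapply Rle_lt_trans. apply ee_lip. lra. Qed.

Section Goursat.
Variables (P0 P1 : C) (q0 q1 : R).

Definition Phi x y : C := (P0 + RtoC x * P1 + RtoC (q0 + x * q1) * ee y)%C.
Definition Phix (y : R) : C := (P1 + RtoC q1 * ee y)%C.
Definition Phiy x y : C := (RtoC (q0 + x * q1) * (Ci * ee y))%C.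

Definition Fprim (al be w : C) : C := (al * w + be * w * w / 2)%C.

Lemma ftc_x (al be : C) y a b :
  @is_RInt CR (fun x => (al + be * Phi x y) * Phix y)%C a b
     (Fprim al be (Phi b y) - Fprim al be (Phi a y))%C.
Proof.
  replace (Fprim al be (Phi b y) - Fprim al be (Phi a y))%C with
    ((fst (Fprim al be (Phi b y)) - fst (Fprim al be (Phi a y)),
      snd (Fprim al be (Phi b y)) - snd (Fprim al be (Phi a y))) : C)
    by (apply injective_projections; simpl; ring).
  apply is_RInt_fct_extend_pair; simpl.
  - apply (is_RInt_derive (V := R_CompleteNormedModule) (fun x => fst (Fprim al be (Phi x y)))).
    + intros x _. unfold Fprim, Phi, Phix, ee; simpl. auto_derive; auto. simpl. field.
    + intros x _. apply (ex_derive_continuous (V := R_NormedModule)). unfold Phi, Phix, ee; simpl. auto_derive; auto.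
  - apply (is_RInt_derive (V := R_CompleteNormedModule) (fun x => snd (Fprim al be (Phi x y)))).
    + intros x _. unfold Fprim, Phi, Phix, ee; simpl. auto_derive; auto. simpl. field.
    + intros x _. apply (ex_derive_continuous (V := R_NormedModule)). unfold Phi, Phix, ee; simpl. auto_derive; auto.
Qed.

Lemma ftc_y (al be : C) x c d :
  @is_RInt CR (fun y => (al + be * Phi x y) * Phiy x y)%C c d
     (Fprim al be (Phi x d) - Fprim al be (Phi x c))%C.
Proof.
  replace (Fprim al be (Phi x d) - Fprim al be (Phi x c))%C with
    ((fst (Fprim al be (Phi x d)) - fst (Fprim al be (Phi x c)),
      snd (Fprim al be (Phi x d)) - snd (Fprim al be (Phi x c))) : C)
    by (apply injective_projections; simpl; ring).
  apply is_RInt_fct_extend_pair; simpl.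
  - apply (is_RInt_derive (V := R_CompleteNormedModule) (fun y => fst (Fprim al be (Phi x y)))).
    + intros y _. unfold Fprim, Phi, Phiy, ee; simpl. auto_derive; auto. simpl. field.
    + intros y _. apply (ex_derive_continuous (V := R_NormedModule)). unfold Phi, Phiy, ee; simpl. auto_derive; auto.
  - apply (is_RInt_derive (V := R_CompleteNormedModule) (fun y => snd (Fprim al be (Phi x y)))).
    + intros y _. unfold Fprim, Phi, Phiy, ee; simpl. auto_derive; auto. simpl. field.
    + intros y _. apply (ex_derive_continuous (V := R_NormedModule)). unfold Phi, Phiy, ee; simpl. auto_derive; auto.
Qed.

Lemma Phi_lip x y x0 y0 :
  Cmod (Phi x y - Phi x0 y0) <= (Cmod P1 + Rabs q1) * Rabs (x - x0) + 2 * Rabs (q0 + x0 * q1) * Rabs (y - y0).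
Proof.
  replace (Phi x y - Phi x0 y0)%C with
    (RtoC (x - x0) * P1 + RtoC ((x - x0) * q1) * ee y + RtoC (q0 + x0 * q1) * (ee y - ee y0))%C
    by (unfold Phi; apply injective_projections; simpl; ring).
  eapply Rle_trans. apply Cmod_triangle. eapply Rle_trans. apply Rplus_le_compat_r. apply Cmod_triangle.
  rewrite !Cmod_RtoC_mult, Cmod_ee, Rabs_mult.
  pose proof (ee_lip y0 y). pose proof (Rabs_pos (q0 + x0 * q1)).
  pose proof (Rabs_pos (x - x0)). pose proof (Rabs_pos q1). pose proof (Cmod_ge_0 P1).
  assert (Rabs (q0 + x0 * q1) * Cmod (ee y - ee y0) <= Rabs (q0 + x0 * q1) * (2 * Rabs (y - y0))) by
    (apply Rmult_le_compat_l; auto). nra.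
Qed.

Lemma Phix_bound y : Cmod (Phix y) <= Cmod P1 + Rabs q1.
Proof. unfold Phix. eapply Rle_trans. apply Cmod_triangle. rewrite Cmod_RtoC_mult, Cmod_ee. lra. Qed.

Lemma Phiy_bound x y : Cmod (Phiy x y) = Rabs (q0 + x * q1).
Proof. unfold Phiy. rewrite Cmod_RtoC_mult, Cmod_mult, Cmod_ee, Cmod_Ci. ring. Qed.

Variable g : C -> C.
Definition Gx x y := (g (Phi x y) * Phix y)%C.
Definition Gy x y := (g (Phi x y) * Phiy x y)%C.
Definition Bnd a b c d :=
  (CInt (fun x => Gx x c) a b + CInt (fun y => Gy b y) c d
   - CInt (fun x => Gx x d) a b - CInt (fun y => Gy a y) c d)%C.

Lemma Gx_cont x y : cdiff g (Phi x y) -> rcont (fun x => Gx x y) x.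
Proof.
  intros H. unfold Gx. apply (rcont_mult (fun x => g (Phi x y)) (fun _ => Phix y)); [|apply rcont_const].
  apply (rcont_comp g (fun x => Phi x y) x (Cmod P1 + Rabs q1 + 1)).
  - pose proof (Cmod_ge_0 P1); pose proof (Rabs_pos q1); lra.
  - intros s. eapply Rle_trans. apply Phi_lip. replace (y - y) with 0 by ring. rewrite Rabs_R0.
    pose proof (Rabs_pos (s - x)). nra.
  - apply cdiff_cont; auto.
Qed.

Lemma Gy_cont x y : cdiff g (Phi x y) -> rcont (fun y => Gy x y) y.
Proof.
  intros H. unfold Gy. apply (rcont_mult (fun y => g (Phi x y)) (fun y => Phiy x y)).
  - apply (rcont_comp g (fun y => Phi x y) y (2 * Rabs (q0 + x * q1) + 1)).
    + pose proof (Rabs_pos (q0 + x * q1)); lra.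
    + intros s. eapply Rle_trans. apply Phi_lip. replace (x - x) with 0 by ring. rewrite Rabs_R0.
      pose proof (Rabs_pos (s - y)). nra.
    + apply cdiff_cont; auto.
  - unfold Phiy. apply (rcont_mult (fun _ => RtoC (q0 + x * q1)) (fun y => Ci * ee y)%C). apply rcont_const.
    apply (rcont_mult (fun _ => Ci) ee). apply rcont_const. apply rcont_ee.
Qed.

Lemma CInt_chasles (f : R -> C) a m b : a <= m <= b -> (forall t, a <= t <= b -> rcont f t) ->
  CInt f a b = (CInt f a m + CInt f m b)%C.
Proof.
  intros Hm Hf. unfold CInt. rewrite <- (RInt_Chasles (V := CR) f a m b).
  reflexivity.
  apply rcont_exRInt; [lra|intros; apply Hf; lra].
  apply rcont_exRInt; [lra|intros; apply Hf; lra].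
Qed.

Variables a0 b0 c0 d0 : R.
Hypothesis Hg : forall x y, a0 <= x <= b0 -> c0 <= y <= d0 -> cdiff g (Phi x y).

Lemma Bnd_split a b c d : a0 <= a -> a <= b -> b <= b0 -> c0 <= c -> c <= d -> d <= d0 ->
  Bnd a b c d = (Bnd a ((a+b)/2) c ((c+d)/2) + Bnd ((a+b)/2) b c ((c+d)/2)
               + Bnd a ((a+b)/2) ((c+d)/2) d + Bnd ((a+b)/2) b ((c+d)/2) d)%C.
Proof.
  intros. unfold Bnd.
  rewrite (CInt_chasles (fun x => Gx x c) a ((a+b)/2) b) by (try lra; intros; apply Gx_cont, Hg; lra).
  rewrite (CInt_chasles (fun x => Gx x d) a ((a+b)/2) b) by (try lra; intros; apply Gx_cont, Hg; lra).
  rewrite (CInt_chasles (fun y => Gy a y) c ((c+d)/2) d) by (try lra; intros; apply Gy_cont, Hg; lra).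
  rewrite (CInt_chasles (fun y => Gy b y) c ((c+d)/2) d) by (try lra; intros; apply Gy_cont, Hg; lra).
  ring.
Qed.

Lemma side_x (al be : C) y a b M : a <= b -> (forall t, a <= t <= b -> rcont (fun x => Gx x y) t) ->
  (forall x, a <= x <= b -> Cmod (g (Phi x y) - (al + be * Phi x y)) <= M) ->
  Cmod (CInt (fun x => Gx x y) a b - (Fprim al be (Phi b y) - Fprim al be (Phi a y))) <= (b - a) * (M * (Cmod P1 + Rabs q1)).
Proof.
  intros Hab Hc HM.
  assert (I1 : @is_RInt CR (fun x => Gx x y) a b (CInt (fun x => Gx x y) a b)).
  { apply (RInt_correct (V := CR)). apply rcont_exRInt; auto. }
  pose proof (is_RInt_minus _ _ _ _ _ _ I1 (ftc_x al be y a b)) as I3.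
  assert (BD : forall x, a <= x <= b -> @norm R_AbsRing CR (minus (Gx x y) ((al + be * Phi x y) * Phix y)%C) <= M * (Cmod P1 + Rabs q1)).
  { intros x Hx. rewrite norm_CR.
    change (Cmod (Gx x y - (al + be * Phi x y) * Phix y) <= M * (Cmod P1 + Rabs q1)).
    unfold Gx. replace (g (Phi x y) * Phix y - (al + be * Phi x y) * Phix y)%C with
      ((g (Phi x y) - (al + be * Phi x y)) * Phix y)%C by ring.
    rewrite Cmod_mult. apply Rmult_le_compat; auto using Cmod_ge_0, Phix_bound. }
  pose proof (norm_RInt_le_const _ a b _ _ Hab BD I3) as N. rewrite norm_CR in N. exact N.
Qed.

Lemma side_y (al be : C) x c d M : c <= d -> (forall t, c <= t <= d -> rcont (fun y => Gy x y) t) ->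
  (forall y, c <= y <= d -> Cmod (g (Phi x y) - (al + be * Phi x y)) <= M) ->
  Cmod (CInt (fun y => Gy x y) c d - (Fprim al be (Phi x d) - Fprim al be (Phi x c))) <= (d - c) * (M * Rabs (q0 + x * q1)).
Proof.
  intros Hab Hc HM.
  assert (I1 : @is_RInt CR (fun y => Gy x y) c d (CInt (fun y => Gy x y) c d)).
  { apply (RInt_correct (V := CR)). apply rcont_exRInt; auto. }
  pose proof (is_RInt_minus _ _ _ _ _ _ I1 (ftc_y al be x c d)) as I3.
  assert (BD : forall y, c <= y <= d -> @norm R_AbsRing CR (minus (Gy x y) ((al + be * Phi x y) * Phiy x y)%C) <= M * Rabs (q0 + x * q1)).
  { intros y Hy. rewrite norm_CR.
    change (Cmod (Gy x y - (al + be * Phi x y) * Phiy x y) <= M * Rabs (q0 + x * q1)).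
    unfold Gy. replace (g (Phi x y) * Phiy x y - (al + be * Phi x y) * Phiy x y)%C with
      ((g (Phi x y) - (al + be * Phi x y)) * Phiy x y)%C by ring.
    rewrite Cmod_mult, Phiy_bound. apply Rmult_le_compat; auto using Cmod_ge_0, Rabs_pos; apply Rle_refl. }
  pose proof (norm_RInt_le_const _ c d _ _ Hab BD I3) as N. rewrite norm_CR in N. exact N.
Qed.

Lemma Bnd_local (HW : a0 < b0) (HH : c0 < d0) eps0 (He : 0 < eps0) x0 y0 :
  a0 <= x0 <= b0 -> c0 <= y0 <= d0 -> exists del, 0 < del /\
  forall a b c d, a0 <= a -> b <= b0 -> c0 <= c -> d <= d0 ->
    a <= x0 <= b -> c <= y0 <= d -> b - a < del -> d - c < del ->
    (b - a) * (d0 - c0) = (d - c) * (b0 - a0) ->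
    Cmod (Bnd a b c d) <= eps0 * ((b - a) * (d - c)).
Proof.
  intros Hx0 Hy0. destruct (Hg x0 y0 Hx0 Hy0) as [D HD].
  set (p := Phi x0 y0).
  set (Kx := Rabs a0 + Rabs b0).
  set (L := Cmod P1 + Rabs q1 + 2 * (Rabs q0 + Rabs q1 * Kx) + 1).
  pose proof (Cmod_ge_0 P1). pose proof (Rabs_pos q1). pose proof (Rabs_pos q0).
  assert (HKx : 0 <= Kx) by (unfold Kx; pose proof (Rabs_pos a0); pose proof (Rabs_pos b0); lra).
  assert (HL : 1 <= L) by (unfold L; nra).
  set (W := b0 - a0). set (Hh := d0 - c0).
  set (eps := eps0 * W * Hh / (2 * (L * L) * ((W + Hh) * (W + Hh)))).
  assert (Heps : 0 < eps).
  { unfold eps, W, Hh. apply Rdiv_lt_0_compat. repeat apply Rmult_lt_0_compat; lra.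
    repeat apply Rmult_lt_0_compat; nra. }
  destruct (HD eps Heps) as [eta [Heta Hdel]].
  exists (eta / (2 * L)). split. apply Rdiv_lt_0_compat; lra.
  intros a b c d Ha Hb Hc Hd Hxab Hycd Hba Hdc Hrat.
  set (s := (b - a) + (d - c)).
  assert (Hs : L * s < eta).
  { unfold s. apply (Rmult_lt_compat_l L) in Hba; [|lra]. apply (Rmult_lt_compat_l L) in Hdc; [|lra].
    replace (L * (eta / (2 * L))) with (eta / 2) in Hba, Hdc by (field; lra). lra. }
  assert (Hq : forall x, a0 <= x <= b0 -> Rabs (q0 + x * q1) <= Rabs q0 + Rabs q1 * Kx).
  { intros x Hx. eapply Rle_trans. apply Rabs_triang. rewrite Rabs_mult.
    assert (Rabs x <= Kx).
    { unfold Kx. apply Rabs_le. pose proof (Rle_abs a0); pose proof (Rle_abs b0);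
      pose proof (Rle_abs (-a0)); pose proof (Rle_abs (- b0)); rewrite Rabs_Ropp in *; lra. }
    pose proof (Rabs_pos x). nra. }
  assert (C1 : forall x y, a <= x <= b -> c <= y <= d -> Cmod (Phi x y - p) <= L * s).
  { intros x y Hx Hy. unfold p. eapply Rle_trans. apply Phi_lip.
    assert (Rabs (x - x0) <= b - a) by (apply Rabs_le; lra).
    assert (Rabs (y - y0) <= d - c) by (apply Rabs_le; lra).
    specialize (Hq x0 Hx0). pose proof (Rabs_pos (x - x0)). pose proof (Rabs_pos (y - y0)).
    pose proof (Rabs_pos (q0 + x0 * q1)).
    unfold s, L. nra. }
  set (al := (g p - D * p)%C). set (be := D).
  assert (C2 : forall x y, a <= x <= b -> c <= y <= d ->
            Cmod (g (Phi x y) - (al + be * Phi x y)) <= eps * (L * s)).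
  { intros x y Hx Hy. specialize (C1 x y Hx Hy).
    replace (g (Phi x y) - (al + be * Phi x y))%C with (g (Phi x y) - g p - D * (Phi x y - p))%C
      by (unfold al, be; ring).
    unfold p in *. eapply Rle_trans. apply Hdel. lra. apply Rmult_le_compat_l; lra. }
  assert (Hab : a <= b) by lra. assert (Hcd : c <= d) by lra.
  pose proof (side_x al be c a b (eps * (L * s)) Hab
    (fun t Ht => Gx_cont t c (Hg t c ltac:(lra) ltac:(lra))) (fun x Hx => C2 x c Hx ltac:(lra))) as S1.
  pose proof (side_x al be d a b (eps * (L * s)) Hab
    (fun t Ht => Gx_cont t d (Hg t d ltac:(lra) ltac:(lra))) (fun x Hx => C2 x d Hx ltac:(lra))) as S3.
  pose proof (side_y al be b c d (eps * (L * s)) Hcd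
    (fun t Ht => Gy_cont b t (Hg b t ltac:(lra) ltac:(lra))) (fun y Hy => C2 b y ltac:(lra) Hy)) as S2.
  pose proof (side_y al be a c d (eps * (L * s)) Hcd
    (fun t Ht => Gy_cont a t (Hg a t ltac:(lra) ltac:(lra))) (fun y Hy => C2 a y ltac:(lra) Hy)) as S4.
  assert (Hqa : Rabs (q0 + a * q1) <= L) by (specialize (Hq a ltac:(lra)); unfold L; nra).
  assert (Hqb : Rabs (q0 + b * q1) <= L) by (specialize (Hq b ltac:(lra)); unfold L; nra).
  assert (HP : Cmod P1 + Rabs q1 <= L) by (unfold L; nra).
  assert (Hs0 : 0 <= s) by (unfold s; lra).
  assert (HM : 0 <= eps * (L * s)) by (apply Rmult_le_pos; nra).
  unfold Bnd.
  match goal with |- Cmod ?X <= _ =>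
    replace X with
    ((CInt (fun x => Gx x c) a b - (Fprim al be (Phi b c) - Fprim al be (Phi a c)))
     + (CInt (fun y => Gy b y) c d - (Fprim al be (Phi b d) - Fprim al be (Phi b c)))
     - (CInt (fun x => Gx x d) a b - (Fprim al be (Phi b d) - Fprim al be (Phi a d)))
     - (CInt (fun y => Gy a y) c d - (Fprim al be (Phi a d) - Fprim al be (Phi a c))))%C by ring end.
  set (T1 := (CInt (fun x => Gx x c) a b - (Fprim al be (Phi b c) - Fprim al be (Phi a c)))%C) in *.
  set (T2 := (CInt (fun y => Gy b y) c d - (Fprim al be (Phi b d) - Fprim al be (Phi b c)))%C) in *.
  set (T3 := (CInt (fun x => Gx x d) a b - (Fprim al be (Phi b d) - Fprim al be (Phi a d)))%C) in *.
  set (T4 := (CInt (fun y => Gy a y) c d - (Fprim al be (Phi a d) - Fprim al be (Phi a c)))%C) in *.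
  assert (E : Cmod (T1 + T2 - T3 - T4) <= Cmod T1 + Cmod T2 + Cmod T3 + Cmod T4).
  { unfold Cminus. eapply Rle_trans. apply Cmod_triangle. rewrite Cmod_opp.
    eapply Rle_trans. apply Rplus_le_compat_r. apply Cmod_triangle. rewrite Cmod_opp.
    eapply Rle_trans. apply Rplus_le_compat_r. apply Rplus_le_compat_r. apply Cmod_triangle. lra. }
  assert (B1 : Cmod T1 <= (b - a) * (eps * (L * s) * L)).
  { eapply Rle_trans. exact S1. apply Rmult_le_compat_l. lra. apply Rmult_le_compat_l; auto. }
  assert (B3 : Cmod T3 <= (b - a) * (eps * (L * s) * L)).
  { eapply Rle_trans. exact S3. apply Rmult_le_compat_l. lra. apply Rmult_le_compat_l; auto. }
  assert (B2 : Cmod T2 <= (d - c) * (eps * (L * s) * L)).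
  { eapply Rle_trans. exact S2. apply Rmult_le_compat_l. lra. apply Rmult_le_compat_l; auto. }
  assert (B4 : Cmod T4 <= (d - c) * (eps * (L * s) * L)).
  { eapply Rle_trans. exact S4. apply Rmult_le_compat_l. lra. apply Rmult_le_compat_l; auto. }
  assert (Fin : 2 * (eps * (L * L)) * (s * s) = eps0 * ((b - a) * (d - c))).
  { unfold eps. fold W Hh in Hrat.
    assert (Hid : (s * s) * (W * Hh) = ((W + Hh) * (W + Hh)) * ((b - a) * (d - c))).
    { assert (Z : (b - a) * Hh - (d - c) * W = 0) by lra.
      apply Rminus_diag_uniq.
      replace ((s * s) * (W * Hh) - ((W + Hh) * (W + Hh)) * ((b - a) * (d - c))) with
        (((b - a) * Hh - (d - c) * W) * ((b - a) * W - (d - c) * Hh)) by (unfold s; ring).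
      rewrite Z; ring. }
    assert (0 < W) by (unfold W; lra). assert (0 < Hh) by (unfold Hh; lra).
    replace (2 * (eps0 * W * Hh / (2 * (L * L) * ((W + Hh) * (W + Hh))) * (L * L)) * (s * s)) with
      (eps0 * ((s * s) * (W * Hh)) / ((W + Hh) * (W + Hh))) by (field; split; lra).
    rewrite Hid. field. lra. }
  assert (Sum : (b - a) * (eps * (L * s) * L) * 2 + (d - c) * (eps * (L * s) * L) * 2 = 2 * (eps * (L * L)) * (s * s)).
  { unfold s. ring. }
  lra.
Qed.

Theorem goursat (HW : a0 < b0) (HH : c0 < d0) : Bnd a0 b0 c0 d0 = 0%C.
Proof.
  apply Cmod_eq_0. apply Rle_antisym; [|apply Cmod_ge_0].
  apply Rnot_lt_le. intros Hpos.
  set (eps0 := Cmod (Bnd a0 b0 c0 d0) / (2 * ((b0 - a0) * (d0 - c0)))).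
  assert (He : 0 < eps0) by (apply Rdiv_lt_0_compat; [lra|]; nra).
  assert (Main : Cmod (Bnd a0 b0 c0 d0) <= eps0 * ((b0 - a0) * (d0 - c0))).
  { refine (cousin2 (fun a b c d => a0 <= a -> a <= b -> b <= b0 -> c0 <= c -> c <= d -> d <= d0 ->
                 Cmod (Bnd a b c d) <= eps0 * ((b - a) * (d - c))) a0 b0 c0 d0 HW HH _ _ _ _ _ _ _ _);
      try lra.
    - intros a b c d H1 H2 H3 H4 Ha Hab Hb Hc Hcd Hd.
      rewrite (Bnd_split a b c d) by lra.
      specialize (H1 Ha ltac:(lra) ltac:(lra) Hc ltac:(lra) ltac:(lra)).
      specialize (H2 ltac:(lra) ltac:(lra) Hb Hc ltac:(lra) ltac:(lra)).
      specialize (H3 Ha ltac:(lra) ltac:(lra) ltac:(lra) ltac:(lra) Hd).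
      specialize (H4 ltac:(lra) ltac:(lra) Hb ltac:(lra) ltac:(lra) Hd).
      eapply Rle_trans. apply Cmod_triangle. eapply Rle_trans. apply Rplus_le_compat_r. apply Cmod_triangle.
      eapply Rle_trans. apply Rplus_le_compat_r. apply Rplus_le_compat_r. apply Cmod_triangle.
      replace (eps0 * ((b - a) * (d - c))) with
        (eps0 * (((a + b) / 2 - a) * ((c + d) / 2 - c)) + eps0 * ((b - (a + b) / 2) * ((c + d) / 2 - c))
         + eps0 * (((a + b) / 2 - a) * (d - (c + d) / 2)) + eps0 * ((b - (a + b) / 2) * (d - (c + d) / 2))) by field.
      lra.
    - intros x y Hx Hy. destruct (Bnd_local HW HH eps0 He x y Hx Hy) as [del [Hdel Hl]].
      exists del. split; [auto|]. intros a b c d Ha Hb Hc Hd Hxab Hycd Hba Hdc Hr _ _ _ _ _ _.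
      apply Hl; auto. }
  unfold eps0 in Main. 
  replace (Cmod (Bnd a0 b0 c0 d0) / (2 * ((b0 - a0) * (d0 - c0))) * ((b0 - a0) * (d0 - c0))) with
    (Cmod (Bnd a0 b0 c0 d0) / 2) in Main by (field; nra).
  lra.
Qed.
End Goursat.

Lemma CInt_ext (f h : R -> C) a b : (forall y, f y = h y) -> CInt f a b = CInt h a b.
Proof. intros H. f_equal. apply functional_extensionality; auto. Qed.

Lemma ee_2PI : ee (2 * PI) = ee 0.
Proof. unfold ee. rewrite cos_2PI, sin_2PI, cos_0, sin_0. reflexivity. Qed.

Lemma circle_id (g : C -> C) (c : C) (r t : R) : 0 < t -> Cmod c + t <= r ->
  (forall x y, 0 <= x <= 1 -> 0 <= y <= 2 * PI -> cdiff g (Phi c (-c) t (r - t) x y)) ->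
  CInt (fun y => g (RtoC r * ee y) * (RtoC r * (Ci * ee y)))%C 0 (2 * PI) =
  CInt (fun y => g (c + RtoC t * ee y) * (RtoC t * (Ci * ee y)))%C 0 (2 * PI).
Proof.
  intros Ht Hr Hg.
  pose proof (goursat c (-c) t (r - t) g 0 1 0 (2 * PI) Hg ltac:(lra)) as G.
  assert (0 < PI) by apply PI_RGT_0.
  specialize (G ltac:(lra)). unfold Bnd in G.
  rewrite (CInt_ext (fun x => Gx c (-c) t (r - t) g x (2 * PI)) (fun x => Gx c (-c) t (r - t) g x 0)) in G.
  2:{ intros x. unfold Gx, Phi, Phix. rewrite ee_2PI. reflexivity. }
  rewrite (CInt_ext (fun y => Gy c (- c) t (r - t) g 1 y) (fun y => g (RtoC r * ee y) * (RtoC r * (Ci * ee y)))%C) in G.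
  2:{ intros y. unfold Gy, Phi, Phiy. f_equal; [f_equal|f_equal]; apply injective_projections; simpl; ring. }
  rewrite (CInt_ext (fun y => Gy c (- c) t (r - t) g 0 y) (fun y => g (c + RtoC t * ee y) * (RtoC t * (Ci * ee y)))%C) in G.
  2:{ intros y. unfold Gy, Phi, Phiy. f_equal; [f_equal|f_equal]; apply injective_projections; simpl; ring. }
  set (I1 := CInt (fun x => Gx c (- c) t (r - t) g x 0) 0 1) in G.
  set (I2 := CInt (fun y => g (RtoC r * ee y) * (RtoC r * (Ci * ee y)))%C 0 (2 * PI)) in *.
  set (I3 := CInt (fun y => g (c + RtoC t * ee y) * (RtoC t * (Ci * ee y)))%C 0 (2 * PI)) in *.
  replace I2 with ((I1 + I2 - I1 - I3) + I3)%C by ring. rewrite G. ring.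
Qed.

Lemma rcont_ext (h1 h2 : R -> C) t : (forall s, h1 s = h2 s) -> rcont h1 t -> rcont h2 t.
Proof. intros E H eps He. destruct (H eps He) as [d [Hd Hs]]. exists d; split; auto.
  intros s Hs'. rewrite <- !E. auto. Qed.

Lemma CInt_correct (h : R -> C) a b : a <= b -> (forall t, a <= t <= b -> rcont h t) ->
  @is_RInt CR h a b (CInt h a b).
Proof. intros. apply (RInt_correct (V := CR)). apply rcont_exRInt; auto. Qed.

Lemma CInt_scalC (k : C) (h : R -> C) a b : a <= b -> (forall t, a <= t <= b -> rcont h t) ->
  CInt (fun y => k * h y)%C a b = (k * CInt h a b)%C.
Proof.
  intros Hab Hc. pose proof (CInt_correct h a b Hab Hc) as I.
  unfold CInt at 1. apply (is_RInt_unique (V := CR)).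
  set (J := CInt h a b) in *.
  replace (k * J)%C with ((fst k * fst J - snd k * snd J, fst k * snd J + snd k * fst J) : C) by reflexivity.
  apply is_RInt_fct_extend_pair; simpl.
  - apply (is_RInt_minus (V := R_NormedModule)).
    + apply (is_RInt_scal (V := R_NormedModule) (fun y => fst (h y))). apply (is_RInt_fct_extend_fst _ _ _ _ I).
    + apply (is_RInt_scal (V := R_NormedModule) (fun y => snd (h y))). apply (is_RInt_fct_extend_snd _ _ _ _ I).
  - apply (is_RInt_plus (V := R_NormedModule)).
    + apply (is_RInt_scal (V := R_NormedModule) (fun y => snd (h y))). apply (is_RInt_fct_extend_snd _ _ _ _ I).
    + apply (is_RInt_scal (V := R_NormedModule) (fun y => fst (h y))). apply (is_RInt_fct_extend_fst _ _ _ _ I).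
Qed.

Lemma CInt_const (k : C) a b : CInt (fun _ => k) a b = (RtoC (b - a) * k)%C.
Proof. unfold CInt. apply (is_RInt_unique (V := CR)).
  replace (RtoC (b - a) * k)%C with (@scal R_AbsRing CR (b - a) k).
  apply (is_RInt_const (V := CR)). apply injective_projections; simpl; unfold scal; simpl; unfold mult; simpl; ring. Qed.

Lemma CInt_minus (f h : R -> C) a b : a <= b -> (forall t, a <= t <= b -> rcont f t) ->
  (forall t, a <= t <= b -> rcont h t) ->
  CInt (fun y => f y - h y)%C a b = (CInt f a b - CInt h a b)%C.
Proof. intros Hab Hf Hh. unfold CInt at 1. apply (is_RInt_unique (V := CR)).
  apply (is_RInt_minus (V := CR)); apply CInt_correct; auto. Qed.

Lemma CInt_bound (h : R -> C) a b M : a <= b -> (forall t, a <= t <= b -> rcont h t) ->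
  (forall t, a <= t <= b -> Cmod (h t) <= M) -> Cmod (CInt h a b) <= (b - a) * M.
Proof. intros Hab Hc HM. rewrite <- norm_CR. apply (norm_RInt_le_const (V := CR) h a b); auto.
  intros; rewrite norm_CR; auto. apply CInt_correct; auto. Qed.

Lemma rcont_sub_const (h : R -> C) (k : C) t : rcont h t -> rcont (fun s => h s - k)%C t.
Proof. intros H eps He. destruct (H eps He) as [d [Hd Hs]]. exists d; split; auto.
  intros s Hs'. replace (h s - k - (h t - k))%C with (h s - h t)%C by ring. auto. Qed.

Lemma Phi_dom c r t x y : 0 < t -> Cmod c + t <= r -> 0 <= x <= 1 ->
  Cmod (Phi c (-c) t (r - t) x y) <= r /\ (- c + 1 * Phi c (-c) t (r - t) x y)%C <> 0%C.
Proof.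
  intros Ht Hr Hx. pose proof (Cmod_ge_0 c).
  set (s := t + x * (r - t)).
  assert (Hs : 0 < s) by (unfold s; nra).
  split.
  - replace (Phi c (- c) t (r - t) x y) with (RtoC (1 - x) * c + RtoC s * ee y)%C
      by (unfold Phi, s; apply injective_projections; simpl; ring).
    eapply Rle_trans. apply Cmod_triangle. rewrite !Cmod_RtoC_mult, Cmod_ee.
    rewrite (Rabs_right (1 - x)) by lra. rewrite Rabs_right by lra. unfold s. nra.
  - replace (- c + 1 * Phi c (- c) t (r - t) x y)%C with (RtoC s * ee y - RtoC x * c)%C
      by (unfold Phi, s; apply injective_projections; simpl; ring).
    intros E. pose proof (Cmod_triangle_minus (RtoC s * ee y) (RtoC x * c)) as T.
    rewrite E, Cmod_0, !Cmod_RtoC_mult, Cmod_ee, !Rabs_right in T by lra.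
    unfold s in *. nra.
Qed.

Lemma cauchy_formula (F : C -> C) (c : C) (r : R) : Cmod c < r ->
  (forall w, Cmod w <= r -> cdiff F w) ->
  CInt (fun y => F (RtoC r * ee y) * (RtoC r * ee y / (RtoC r * ee y - c)))%C 0 (2 * PI) = (RtoC (2 * PI) * F c)%C.
Proof.
  intros Hc HF. assert (HPI : 0 < PI) by apply PI_RGT_0.
  set (X := CInt (fun y => F (RtoC r * ee y) * (RtoC r * ee y / (RtoC r * ee y - c)))%C 0 (2 * PI)).
  set (g := fun w => (F w * / (- c + 1 * w))%C).
  assert (Key : forall t, 0 < t -> Cmod c + t <= r ->
            X = CInt (fun y => F (c + RtoC t * ee y)%C) 0 (2 * PI)).
  { intros t Ht Htr.
    assert (Hg : forall x y, 0 <= x <= 1 -> 0 <= y <= 2 * PI -> cdiff g (Phi c (-c) t (r - t) x y)).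
    { intros x y Hx _. destruct (Phi_dom c r t x y Ht Htr Hx) as [D1 D2].
      apply cdiff_mult. apply HF; auto. apply cdiff_inv_aff; auto. }
    pose proof (circle_id g c r t Ht Htr Hg) as CI.
    assert (Hr1 : forall y, Phi c (-c) t (r - t) 1 y = (RtoC r * ee y)%C)
      by (intros; unfold Phi; apply injective_projections; simpl; ring).
    assert (Hr0 : forall y, Phi c (-c) t (r - t) 0 y = (c + RtoC t * ee y)%C)
      by (intros; unfold Phi; apply injective_projections; simpl; ring).
    assert (R1 : forall y, 0 <= y <= 2 * PI -> rcont (fun y => g (RtoC r * ee y) * (RtoC r * (Ci * ee y)))%C y).
    { intros y Hy. eapply rcont_ext; [|apply (Gy_cont c (-c) t (r - t) g 1 y); apply Hg; lra].
      intros s. unfold Gy, Phiy. rewrite Hr1. f_equal. f_equal. apply injective_projections; simpl; ring. }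
    assert (R0 : forall y, 0 <= y <= 2 * PI -> rcont (fun y => F (c + RtoC t * ee y)%C) y).
    { intros y Hy. apply (rcont_comp F (fun y => c + RtoC t * ee y)%C y (2 * t + 1)). lra.
      - intros s. replace (c + RtoC t * ee s - (c + RtoC t * ee y))%C with (RtoC t * (ee s - ee y))%C by ring.
        rewrite Cmod_RtoC_mult, Rabs_right by lra. pose proof (ee_lip y s). pose proof (Rabs_pos (s - y)). nra.
      - apply cdiff_cont. apply HF. rewrite <- Hr0. apply (Phi_dom c r t 0 y); lra. }
    assert (EX : X = ((- Ci) * CInt (fun y => g (RtoC r * ee y) * (RtoC r * (Ci * ee y))) 0 (2 * PI))%C).
    { rewrite <- CInt_scalC; [|lra|exact R1]. unfold X. apply CInt_ext. intros y. unfold g.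
      assert (Hne : (- c + 1 * (RtoC r * ee y))%C <> 0%C).
      { rewrite <- Hr1. apply (Phi_dom c r t 1 y); lra. }
      assert (Hne' : (RtoC r * ee y - c)%C <> 0%C).
      { intros E; apply Hne. rewrite <- E. ring. }
      replace (- c + 1 * (RtoC r * ee y))%C with (RtoC r * ee y - c)%C by ring.
      assert (Hi : (- Ci * Ci)%C = RtoC 1) by (apply injective_projections; simpl; ring).
      transitivity ((- Ci * Ci) * (F (RtoC r * ee y) * / (RtoC r * ee y - c) * (RtoC r * ee y)))%C.
      rewrite Hi. field. auto. ring. }
    rewrite EX, CI. rewrite (CInt_ext _ (fun y => Ci * F (c + RtoC t * ee y)%C)%C).
    rewrite CInt_scalC; [|lra|exact R0]. 
    replace (- Ci * (Ci * CInt (fun y : R => F (c + RtoC t * ee y)%C) 0 (2 * PI)))%C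
      with (CInt (fun y : R => F (c + RtoC t * ee y)%C) 0 (2 * PI)). reflexivity.
    replace (- Ci * (Ci * CInt (fun y : R => F (c + RtoC t * ee y)%C) 0 (2 * PI)))%C with
      ((- (Ci * Ci)) * CInt (fun y : R => F (c + RtoC t * ee y)%C) 0 (2 * PI))%C by ring.
    replace (- (Ci * Ci))%C with (RtoC 1) by (apply injective_projections; simpl; ring). ring.
    intros y. unfold g.
    assert (Hte : (RtoC t * ee y)%C <> 0%C).
    { intros E. pose proof (Cmod_ee y). apply (f_equal Cmod) in E. rewrite Cmod_RtoC_mult, Cmod_0 in E.
      rewrite Rabs_right in E by lra. nra. }
    replace (- c + 1 * (c + RtoC t * ee y))%C with (RtoC t * ee y)%C by ring.
    field. split.
    - intros E. pose proof (Cmod_ee y). rewrite E, Cmod_0 in H. lra.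
    - intros E. apply RtoC_inj in E. lra. }
  apply Ceq_minus. apply Cmod_eq_0.
  apply Rle_antisym; [|apply Cmod_ge_0]. apply Rnot_lt_le. intros Hpos.
  set (eps := Cmod (X - RtoC (2 * PI) * F c) / (4 * PI)).
  assert (He : 0 < eps) by (apply Rdiv_lt_0_compat; lra).
  assert (HFc : Cmod c <= r) by lra.
  destruct (cdiff_cont F c (HF c HFc) eps He) as [d [Hd Hcont]].
  set (t := Rmin (d / 2) (r - Cmod c)).
  assert (Ht : 0 < t) by (apply Rmin_pos; lra).
  assert (Htr : Cmod c + t <= r) by (pose proof (Rmin_r (d / 2) (r - Cmod c)); unfold t; lra).
  assert (Htd : t < d) by (pose proof (Rmin_l (d / 2) (r - Cmod c)); unfold t; lra).
  assert (Hcf : forall y, 0 <= y <= 2 * PI -> rcont (fun y => F (c + RtoC t * ee y)%C) y).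
  { intros y Hy. apply (rcont_comp F (fun y => c + RtoC t * ee y)%C y (2 * t + 1)). lra.
    - intros s. replace (c + RtoC t * ee s - (c + RtoC t * ee y))%C with (RtoC t * (ee s - ee y))%C by ring.
      rewrite Cmod_RtoC_mult, Rabs_right by lra. pose proof (ee_lip y s). pose proof (Rabs_pos (s - y)). nra.
    - apply cdiff_cont. apply HF.
      replace (c + RtoC t * ee y)%C with (Phi c (-c) t (r - t) 0 y)
        by (unfold Phi; apply injective_projections; simpl; ring).
      apply (Phi_dom c r t 0 y); lra. }
  assert (Hcf2 : forall y, 0 <= y <= 2 * PI -> rcont (fun y => F (c + RtoC t * ee y) - F c)%C y).
  { intros y Hy. eapply rcont_sub_const. apply Hcf; auto. }
  assert (Bd : Cmod (CInt (fun y => F (c + RtoC t * ee y) - F c)%C 0 (2 * PI)) <= (2 * PI - 0) * eps).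
  { apply CInt_bound; auto. lra. intros y Hy.
    replace (c + RtoC t * ee y)%C with (RtoC t * ee y + c)%C by ring.
    apply Hcont. replace (RtoC t * ee y + c - c)%C with (RtoC t * ee y)%C by ring.
    rewrite Cmod_RtoC_mult, Cmod_ee, Rabs_right by lra. lra. }
  rewrite CInt_minus in Bd; [|lra|exact Hcf|intros; apply rcont_const].
  rewrite CInt_const in Bd. rewrite <- (Key t Ht Htr) in Bd.
  replace (RtoC (2 * PI - 0)) with (RtoC (2 * PI)) in Bd by (f_equal; ring).
  unfold eps in Bd.
  replace ((2 * PI - 0) * (Cmod (X - RtoC (2 * PI) * F c) / (4 * PI))) with (Cmod (X - RtoC (2 * PI) * F c) / 2) in Bd by (field; lra).
  lra.
Qed.

Lemma rcont_circ (G : C -> C) r y : cdiff G (RtoC r * ee y)%C -> rcont (fun y => G (RtoC r * ee y)%C) y.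
Proof.
  intros H. apply (rcont_comp G (fun y => RtoC r * ee y)%C y (2 * Rabs r + 1)).
  pose proof (Rabs_pos r); lra.
  - intros s. replace (RtoC r * ee s - RtoC r * ee y)%C with (RtoC r * (ee s - ee y))%C by ring.
    rewrite Cmod_RtoC_mult. pose proof (ee_lip y s). pose proof (Rabs_pos (s - y)). pose proof (Rabs_pos r). nra.
  - apply cdiff_cont; auto.
Qed.

Lemma CInt_plus (f h : R -> C) a b : a <= b -> (forall t, a <= t <= b -> rcont f t) ->
  (forall t, a <= t <= b -> rcont h t) ->
  CInt (fun y => f y + h y)%C a b = (CInt f a b + CInt h a b)%C.
Proof. intros Hab Hf Hh. unfold CInt at 1. apply (is_RInt_unique (V := CR)).
  apply (is_RInt_plus (V := CR)); apply CInt_correct; auto. Qed.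

Lemma cdiff_plus g1 g2 p : cdiff g1 p -> cdiff g2 p -> cdiff (fun w => g1 w + g2 w)%C p.
Proof.
  intros [D1 H1] [D2 H2]. exists (D1 + D2)%C. intros eps He.
  destruct (H1 (eps/2)) as [d1 [Hd1 E1]]. lra. destruct (H2 (eps/2)) as [d2 [Hd2 E2]]. lra.
  exists (Rmin d1 d2). split. apply Rmin_pos; auto. intros w Hw.
  specialize (E1 w (Rlt_le_trans _ _ _ Hw (Rmin_l _ _))). specialize (E2 w (Rlt_le_trans _ _ _ Hw (Rmin_r _ _))).
  replace (g1 w + g2 w - (g1 p + g2 p) - (D1 + D2) * (w - p))%C with
    ((g1 w - g1 p - D1 * (w - p)) + (g2 w - g2 p - D2 * (w - p)))%C by ring.
  eapply Rle_trans. apply Cmod_triangle. lra.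
Qed.

Definition Pk (z zeta : C) (r y : R) : R := 1 + 2 * fst (zeta * z / (RtoC r * ee y - z))%C.

Lemma ee_conj y : Cconj (ee y) = (/ ee y)%C.
Proof.
  assert (Hne : ee y <> 0%C). { intros E. pose proof (Cmod_ee y). rewrite E, Cmod_0 in H. lra. }
  transitivity ((Cconj (ee y) * ee y) * / ee y)%C. field; auto.
  replace (Cconj (ee y) * ee y)%C with (RtoC 1).
  ring. unfold ee, Cconj; apply injective_projections; simpl.
  pose proof (sin2_cos2 y). unfold Rsqr in H. lra. ring.
Qed.

Lemma RtoC_conj (r : R) : Cconj (RtoC r) = RtoC r.
Proof. unfold Cconj; apply injective_projections; simpl; ring. Qed.

Lemma re_twice (q : C) : RtoC (1 + 2 * fst q) = (1 + q + Cconj q)%C.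
Proof. unfold Cconj; apply injective_projections; simpl; ring. Qed.

Lemma cdiff_frac (c p : C) : p <> c -> cdiff (fun w => w * / (- c + 1 * w))%C p.
Proof. intros H. apply cdiff_mult. apply cdiff_id. apply cdiff_inv_aff.
  intros E; apply H. apply Ceq_minus. rewrite <- E. ring. Qed.

Lemma kernel_formula (F : C -> C) (z zeta : C) (r : R) : 0 < r -> Cmod z < r ->
  (forall w, Cmod w <= r -> cdiff F w) ->
  CInt (fun y => F (RtoC r * ee y) * RtoC (Pk z zeta r y))%C 0 (2 * PI)
  = (RtoC (2 * PI) * (F 0 + zeta * (F z - F 0)))%C.
Proof.
  intros Hr Hz HF. assert (HPI : 0 < PI) by apply PI_RGT_0.
  pose proof (Cmod_ge_0 z).
  set (k := (Cconj zeta * Cconj z)%C).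
  set (A := fun w => ((1 - zeta) * F w + F w * (k * w * / (RtoC (r * r) + (- Cconj z) * w)))%C).
  set (B := fun w => (zeta * F w)%C).
  assert (Hden : forall w, Cmod w <= r -> (RtoC (r * r) + (- Cconj z) * w)%C <> 0%C).
  { intros w Hw E. assert (E2 : (Cconj z * w)%C = RtoC (r * r)).
    { apply Ceq_minus. replace (Cconj z * w - RtoC (r * r))%C with (- (RtoC (r * r) + - Cconj z * w))%C by ring.
      rewrite E. ring. }
    apply (f_equal Cmod) in E2. rewrite Cmod_mult, Cmod_conj, Cmod_R, Rabs_right in E2 by nra.
    pose proof (Cmod_ge_0 w). nra. }
  assert (HA : forall w, Cmod w <= r -> cdiff A w).
  { intros w Hw. unfold A. apply cdiff_plus.
    - apply cdiff_mult. apply cdiff_const. auto.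
    - apply cdiff_mult. auto. apply cdiff_mult. apply cdiff_mult. apply cdiff_const. apply cdiff_id.
      apply cdiff_inv_aff. auto. }
  assert (HB : forall w, Cmod w <= r -> cdiff B w).
  { intros w Hw. unfold B. apply cdiff_mult. apply cdiff_const. auto. }
  pose proof (cauchy_formula A 0%C r ltac:(rewrite Cmod_0; lra) HA) as CA.
  pose proof (cauchy_formula B z r Hz HB) as CB.
  assert (Hcirc : forall y, Cmod (RtoC r * ee y) = r).
  { intros y. rewrite Cmod_RtoC_mult, Cmod_ee, Rabs_right; lra. }
  assert (Hw0 : forall y, (RtoC r * ee y)%C <> 0%C).
  { intros y E. pose proof (Hcirc y). rewrite E, Cmod_0 in H0. lra. }
  assert (Hwz : forall y, (RtoC r * ee y)%C <> z).
  { intros y E. pose proof (Hcirc y). rewrite E in H0. lra. }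
  assert (RA : forall y, 0 <= y <= 2 * PI -> rcont (fun y => A (RtoC r * ee y) * (RtoC r * ee y / (RtoC r * ee y - 0)))%C y).
  { intros y _. eapply rcont_ext; [|apply (rcont_circ (fun w => A w * (w * / (- 0 + 1 * w)))%C)].
    intros s; simpl. f_equal. unfold Cdiv. f_equal. f_equal. ring.
    apply cdiff_mult. apply HA. rewrite Hcirc; lra. apply cdiff_frac. auto. }
  assert (RB : forall y, 0 <= y <= 2 * PI -> rcont (fun y => B (RtoC r * ee y) * (RtoC r * ee y / (RtoC r * ee y - z)))%C y).
  { intros y _. eapply rcont_ext; [|apply (rcont_circ (fun w => B w * (w * / (- z + 1 * w)))%C)].
    intros s; simpl. f_equal. unfold Cdiv. f_equal. f_equal. ring.
    apply cdiff_mult. apply HB. rewrite Hcirc; lra. apply cdiff_frac. auto. }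
  rewrite (CInt_ext _ (fun y => A (RtoC r * ee y) * (RtoC r * ee y / (RtoC r * ee y - 0))
                              + B (RtoC r * ee y) * (RtoC r * ee y / (RtoC r * ee y - z)))%C).
  - rewrite CInt_plus; [|lra|exact RA|exact RB]. rewrite CA, CB. unfold A, B.
    ring.
  - intros y. unfold Pk. rewrite re_twice. unfold A, B.
    pose proof (Hw0 y) as W0. pose proof (Hwz y) as WZ.
    assert (WZ' : (RtoC r * ee y - z)%C <> 0%C) by (apply Cminus_eq_contra; auto).
    assert (Hde := Hden (RtoC r * ee y)%C ltac:(rewrite Hcirc; lra)).
    assert (He0 : ee y <> 0%C). { intros E. apply W0. rewrite E. ring. }
    assert (Hr0 : RtoC r <> 0%C). { intros E. apply W0. rewrite E. ring. }
    assert (Hq : Cconj (zeta * z / (RtoC r * ee y - z))%C =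
                 (k * (RtoC r * ee y) * / (RtoC (r * r) + - Cconj z * (RtoC r * ee y)))%C).
    { rewrite Cdiv_conj by auto. rewrite Cmult_conj, Cminus_conj, Cmult_conj, RtoC_conj, ee_conj.
      unfold k. rewrite RtoC_mult. field.
      pose proof Hde as Hde'. rewrite RtoC_mult in Hde'.
      split; auto. split; auto. intros E. apply Hde'.
      replace (RtoC r * RtoC r + - Cconj z * (RtoC r * ee y))%C with (RtoC r * (RtoC r - Cconj z * ee y))%C by ring.
      rewrite E. ring. }
    rewrite Hq. field. repeat split; auto.
Qed.

Fixpoint fin_enum (n : nat) : list (Fin.t n) :=
  match n with O => nil | S n' => Fin.F1 :: map Fin.FS (fin_enum n') end.

Lemma fin_enum_all n (i : Fin.t n) : In i (fin_enum n).
Proof. induction i; simpl; auto. right. apply in_map; auto. Qed.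

Lemma fin_min n (Q : Fin.t n -> R -> Prop) :
  (forall i d d', 0 < d' <= d -> Q i d -> Q i d') -> (forall i, exists d, 0 < d /\ Q i d) ->
  exists d, 0 < d /\ forall i, Q i d.
Proof.
  intros Hm Hex.
  assert (forall L : list (Fin.t n), exists d, 0 < d /\ forall i, In i L -> Q i d).
  { induction L as [|j L IH].
    - exists 1. split; [lra|]. intros i [].
    - destruct IH as [d1 [Hd1 H1]]. destruct (Hex j) as [d2 [Hd2 H2]].
      exists (Rmin d1 d2). split. apply Rmin_pos; auto.
      intros i [<-|Hi].
      + apply (Hm _ d2); auto. split. apply Rmin_pos; auto. apply Rmin_r.
      + apply (Hm _ d1); auto. split. apply Rmin_pos; auto. apply Rmin_l. }
  destruct (H (fin_enum n)) as [d [Hd Hq]]. exists d; split; auto. intros i. apply Hq, fin_enum_all.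
Qed.

Definition delta {n} (i : Fin.t n) : Cn n := fun j => if Fin.eq_dec j i then RtoC 1 else RtoC 0.

Lemma norm_zero {n} (N : Cn n -> R) : is_norm N -> N (fun _ => RtoC 0) = 0.
Proof. intros [_ [_ [Hs _]]]. specialize (Hs (RtoC 0) (fun _ => RtoC 0)).
  replace (vscal (RtoC 0) (fun _ => RtoC 0)) with (fun _ : Fin.t n => RtoC 0) in Hs.
  rewrite Hs, Cmod_0. ring. unfold vscal. apply functional_extensionality; intros; ring. Qed.

Lemma norm_bound n (N : Cn n -> R) : is_norm N -> exists K, 0 <= K /\
  forall x m, (forall i, Cmod (x i) <= m) -> N x <= K * m.
Proof.
  intros HN. pose proof HN as [Hpos [_ [Hs Ht]]].
  set (part := fun (L : list (Fin.t n)) (x : Cn n) (j : Fin.t n) =>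
                 if in_dec Fin.eq_dec j L then x j else RtoC 0).
  set (KL := fun L : list (Fin.t n) => fold_right (fun i acc => N (delta i) + acc) 0 L).
  assert (KL0 : forall L, 0 <= KL L).
  { induction L; simpl; auto. lra. specialize (Hpos (delta a)). lra. }
  assert (Main : forall L x m, (forall i, Cmod (x i) <= m) -> N (part L x) <= KL L * m).
  { induction L as [|i L IH]; intros x m Hx.
    - simpl. replace (part nil x) with (fun _ : Fin.t n => RtoC 0).
      rewrite norm_zero; auto. lra.
      unfold part. apply functional_extensionality; intros j. simpl. reflexivity.
    - set (c := if in_dec Fin.eq_dec i L then RtoC 0 else x i).
      assert (Hm : 0 <= m). { specialize (Hx i). pose proof (Cmod_ge_0 (x i)). lra. }
      replace (part (i :: L) x) with (vadd (part L x) (vscal c (delta i))).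
      + eapply Rle_trans. apply Ht. rewrite Hs. simpl.
        assert (Cmod c <= m). { unfold c. destruct (in_dec _ _ _). rewrite Cmod_0; auto. auto. }
        specialize (IH x m Hx). pose proof (Hpos (delta i)). pose proof (Cmod_ge_0 c). nra.
      + apply functional_extensionality. intros j. unfold vadd, vscal, part, delta, c.
        destruct (Fin.eq_dec j i) as [->|Hji].
        * destruct (in_dec Fin.eq_dec i L); destruct (in_dec Fin.eq_dec i (i :: L)); simpl in *; try tauto; ring.
        * destruct (in_dec Fin.eq_dec j L); destruct (in_dec Fin.eq_dec j (i :: L)); simpl in *;
          destruct (in_dec Fin.eq_dec i L); try ring;
          exfalso; (repeat match goal with H : _ \/ _ |- _ => destruct H end); try congruence; tauto. }
  exists (KL (fin_enum n)). split; auto. intros x m Hx.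
  replace x with (part (fin_enum n) x) at 1. apply Main; auto.
  apply functional_extensionality; intros j. unfold part. destruct (in_dec _ _ _); auto.
  exfalso. apply n0, fin_enum_all.
Qed.

Lemma norm_int n (N : Cn n -> R) (HN : is_norm N) (g : Fin.t n -> R -> C) (p : R -> C) a0 b0 :
  a0 < b0 -> (forall i t, a0 <= t <= b0 -> rcont (g i) t) -> (forall t, a0 <= t <= b0 -> rcont p t) ->
  (forall t, a0 <= t <= b0 -> N (fun i => g i t) <= fst (p t)) ->
  N (fun i => CInt (g i) a0 b0) <= fst (CInt p a0 b0).
Proof.
  intros Hab Hg Hp Hb. pose proof HN as [Hpos [_ [Hs Ht]]].
  destruct (norm_bound n N HN) as [K [HK HKb]].
  apply Rnot_lt_le. intros Hlt.
  set (gap := N (fun i => CInt (g i) a0 b0) - fst (CInt p a0 b0)).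
  set (eps := gap / (2 * (b0 - a0))).
  assert (He : 0 < eps) by (apply Rdiv_lt_0_compat; unfold gap; lra).
  assert (Main : N (fun i => CInt (g i) a0 b0) <= fst (CInt p a0 b0) + eps * (b0 - a0)).
  { refine (cousin2 (fun a b c d => a0 <= a -> a <= b -> b <= b0 ->
       N (fun i => CInt (g i) a b) <= fst (CInt p a b) + eps * (b - a)) a0 b0 0 1 Hab Rlt_0_1 _ _ _ _ _); try lra.
    - intros a b c d H1 H2 _ _ Ha Hab' Hb'.
      specialize (H1 Ha ltac:(lra) ltac:(lra)). specialize (H2 ltac:(lra) ltac:(lra) Hb').
      replace (fun i => CInt (g i) a b) with (vadd (fun i => CInt (g i) a ((a + b) / 2)) (fun i => CInt (g i) ((a + b) / 2) b)).
      2:{ apply functional_extensionality; intros i. unfold vadd. symmetry. apply CInt_chasles. lra.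
          intros; apply Hg; lra. }
      rewrite (CInt_chasles p a ((a + b) / 2) b) by (try lra; intros; apply Hp; lra).
      eapply Rle_trans. apply Ht.
      replace (fst (CInt p a ((a+b)/2) + CInt p ((a+b)/2) b)%C) with (fst (CInt p a ((a+b)/2)) + fst (CInt p ((a+b)/2) b)) by reflexivity. lra.
    - intros x y Hx _. set (eta := eps / (K + 1)).
      assert (Heta : 0 < eta) by (apply Rdiv_lt_0_compat; lra).
      destruct (fin_min n (fun i d => forall s, Rabs (s - x) < d -> Cmod (g i s - g i x) < eta)) as [d1 [Hd1 D1]].
      { intros i d d' Hd Q s Hsd. apply Q. lra. }
      { intros i. apply (Hg i x Hx eta Heta). }
      destruct (Hp x Hx eta Heta) as [d2 [Hd2 D2]].
      exists (Rmin d1 d2). split. apply Rmin_pos; auto.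
      intros a b c d Ha Hbb _ _ Hxab _ Hba _ _ _ _ Hab'.
      assert (Hclose : forall s, a <= s <= b -> Rabs (s - x) < d1 /\ Rabs (s - x) < d2).
      { intros s Hs'. assert (Rabs (s - x) <= b - a) by (apply Rabs_le; lra).
        pose proof (Rmin_l d1 d2); pose proof (Rmin_r d1 d2). lra. }
      set (E := fun i => CInt (fun s => g i s - g i x)%C a b).
      assert (HV : (fun i => CInt (g i) a b) = vadd (vscal (RtoC (b - a)) (fun i => g i x)) E).
      { apply functional_extensionality; intros i. unfold vadd, vscal, E.
        rewrite CInt_minus; [|lra|intros; apply Hg; lra|intros; apply rcont_const].
        rewrite CInt_const. ring. }
      assert (HE : N E <= K * ((b - a) * eta)).
      { apply HKb. intros i. unfold E. apply CInt_bound. lra.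
        intros t Htt. apply rcont_sub_const. apply Hg; lra.
        intros t Htt. left. apply D1. apply Hclose; auto. }
      assert (HP : (b - a) * (fst (p x) - eta) <= fst (CInt p a b)).
      { assert (Cmod (CInt (fun s => p s - p x)%C a b) <= (b - a) * eta).
        { apply CInt_bound. lra. intros t Htt. apply rcont_sub_const. apply Hp; lra.
          intros t Htt. left. apply D2. apply Hclose; auto. }
        rewrite CInt_minus, CInt_const in H; [|lra|intros; apply Hp; lra|intros; apply rcont_const].
        pose proof (Cmod_ge_Re (CInt p a b - RtoC (b - a) * p x)%C) as H0.
        change (Rabs (fst (CInt p a b) + - ((b - a) * fst (p x) - 0 * snd (p x))) <= Cmod (CInt p a b - RtoC (b - a) * p x)%C) in H0.
        assert (Habs : Rabs (fst (CInt p a b) + - ((b - a) * fst (p x) - 0 * snd (p x))) <= (b - a) * eta) by lra.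
        apply Rabs_le_between in Habs. nra. }
      rewrite HV. eapply Rle_trans. apply Ht. rewrite Hs, Cmod_R, Rabs_right by lra.
      specialize (Hb x Hx).
      assert (K * ((b - a) * eta) + (b - a) * eta <= eps * (b - a)).
      { unfold eta. replace (K * ((b - a) * (eps / (K + 1))) + (b - a) * (eps / (K + 1))) with (eps * (b - a)) by (field; lra). lra. }
      nra. }
  unfold eps in Main. replace (gap / (2 * (b0 - a0)) * (b0 - a0)) with (gap / 2) in Main by (field; lra).
  unfold gap in Main. lra.
Qed.

Lemma rcont_plus h1 h2 t : rcont h1 t -> rcont h2 t -> rcont (fun s => h1 s + h2 s)%C t.
Proof. intros H1 H2 eps He. destruct (H1 (eps/2)) as [d1 [Hd1 E1]]. lra.
  destruct (H2 (eps/2)) as [d2 [Hd2 E2]]. lra.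
  exists (Rmin d1 d2). split. apply Rmin_pos; auto. intros s Hs.
  specialize (E1 s (Rlt_le_trans _ _ _ Hs (Rmin_l _ _))). specialize (E2 s (Rlt_le_trans _ _ _ Hs (Rmin_r _ _))).
  replace (h1 s + h2 s - (h1 t + h2 t))%C with ((h1 s - h1 t) + (h2 s - h2 t))%C by ring.
  eapply Rle_lt_trans. apply Cmod_triangle. lra. Qed.

Lemma rcont_conj h t : rcont h t -> rcont (fun s => Cconj (h s)) t.
Proof. intros H eps He. destruct (H eps He) as [d [Hd E]]. exists d; split; auto.
  intros s Hs. rewrite <- Cminus_conj, Cmod_conj. auto. Qed.

Lemma Pk_cont z zeta r y : 0 < r -> Cmod z < r -> rcont (fun y => RtoC (Pk z zeta r y)) y.
Proof.
  intros Hr Hz.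
  assert (Hq : rcont (fun y => zeta * z / (RtoC r * ee y - z))%C y).
  { eapply rcont_ext; [|apply (rcont_circ (fun w => zeta * z * / (- z + 1 * w))%C r)].
    intros s. unfold Cdiv. f_equal. f_equal. ring.
    apply cdiff_mult. apply cdiff_const. apply cdiff_inv_aff.
    intros E. assert (E2 : (RtoC r * ee y)%C = z).
    { apply Ceq_minus. replace (RtoC r * ee y - z)%C with (- z + 1 * (RtoC r * ee y))%C by ring. exact E. }
    apply (f_equal Cmod) in E2. rewrite Cmod_RtoC_mult, Cmod_ee, Rabs_right in E2 by lra. lra. }
  eapply rcont_ext; [|apply rcont_plus; [apply rcont_plus; [apply rcont_const|exact Hq]|apply rcont_conj; exact Hq]].
  intros s. unfold Pk. rewrite re_twice. reflexivity.
Qed.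

Lemma Pk_nonneg z zeta r y : 0 < r -> Cmod z < r -> Cmod zeta * Cmod z <= (r - Cmod z) / 2 ->
  0 <= Pk z zeta r y.
Proof.
  intros Hr Hz Hzeta. unfold Pk.
  set (q := (zeta * z / (RtoC r * ee y - z))%C).
  assert (Hd : r - Cmod z <= Cmod (RtoC r * ee y - z)).
  { pose proof (Cmod_triangle_minus (RtoC r * ee y) z). rewrite Cmod_RtoC_mult, Cmod_ee, Rabs_right in H by lra. lra. }
  assert (Hne : (RtoC r * ee y - z)%C <> 0%C). { intros E. rewrite E, Cmod_0 in Hd. lra. }
  assert (Hq : Cmod q <= 1 / 2).
  { unfold q. rewrite Cmod_div, Cmod_mult by auto.
    apply (Rmult_le_reg_r (Cmod (RtoC r * ee y - z))). lra.
    unfold Rdiv. rewrite Rmult_assoc, Rinv_l by lra. lra. }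
  pose proof (Cmod_ge_Re q). apply Rabs_le_between in H. 
  assert (- Cmod q <= fst q) by (pose proof (Rabs_le_between (fst q) (Cmod q)); lra).
  lra.
Qed.

Lemma claim_r (n : nat) (N : Cn n -> R) (f : C -> Cn n) (z zeta : C) (r : R) :
  is_norm N -> (forall i w, Cmod w <= r -> cdiff (fun w => f w i) w) ->
  (forall w, Cmod w <= r -> N (f w) <= 1) ->
  0 < r -> Cmod z < r -> Cmod zeta * Cmod z <= (r - Cmod z) / 2 ->
  N (vadd (f 0%C) (vscal zeta (vsub (f z) (f 0%C)))) <= 1.
Proof.
  intros HN HF Hf1 Hr Hz Hzeta. pose proof HN as [Hpos [_ [Hs Ht]]].
  assert (HPI : 0 < PI) by apply PI_RGT_0.
  set (g := fun i y => (RtoC (/ (2 * PI)) * (f (RtoC r * ee y)%C i * RtoC (Pk z zeta r y)))%C).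
  set (p := fun y => (RtoC (/ (2 * PI)) * (1 * RtoC (Pk z zeta r y)))%C).
  assert (Rin : forall i y, rcont (fun y => f (RtoC r * ee y)%C i * RtoC (Pk z zeta r y))%C y).
  { intros i y. apply rcont_mult. apply (rcont_circ (fun w => f w i)). apply HF.
    rewrite Cmod_RtoC_mult, Cmod_ee, Rabs_right; lra. apply Pk_cont; auto. }
  assert (Rp : forall y, rcont (fun y => 1 * RtoC (Pk z zeta r y))%C y).
  { intros y. apply rcont_mult. apply rcont_const. apply Pk_cont; auto. }
  pose proof (norm_int n N HN g p 0 (2 * PI) ltac:(lra)) as NI.
  assert (Main : N (fun i => CInt (g i) 0 (2 * PI)) <= fst (CInt p 0 (2 * PI))).
  { apply NI.
    - intros i t _. unfold g. apply rcont_mult. apply rcont_const. apply Rin.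
    - intros t _. unfold p. apply rcont_mult. apply rcont_const. apply Rp.
    - intros t _. pose proof (Pk_nonneg z zeta r t Hr Hz Hzeta) as HP.
      replace (fun i => g i t) with (vscal (RtoC (/ (2 * PI) * Pk z zeta r t)) (f (RtoC r * ee t)%C)).
      rewrite Hs, Cmod_R, Rabs_right.
      2:{ apply Rle_ge, Rmult_le_pos; auto. left; apply Rinv_0_lt_compat; lra. }
      replace (fst (p t)) with (/ (2 * PI) * Pk z zeta r t) by (unfold p; cbn [fst snd RtoC Cmult]; ring).
      assert (N (f (RtoC r * ee t)%C) <= 1) by (apply Hf1; rewrite Cmod_RtoC_mult, Cmod_ee, Rabs_right; lra).
      assert (0 <= / (2 * PI) * Pk z zeta r t) by (apply Rmult_le_pos; auto; left; apply Rinv_0_lt_compat; lra).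
      nra.
      apply functional_extensionality; intros i. unfold vscal, g. rewrite RtoC_mult. ring. }
  assert (E1 : (fun i => CInt (g i) 0 (2 * PI)) = vadd (f 0%C) (vscal zeta (vsub (f z) (f 0%C)))).
  { apply functional_extensionality; intros i. unfold g.
    rewrite CInt_scalC; [|lra|intros; apply Rin].
    rewrite (kernel_formula (fun w => f w i) z zeta r Hr Hz (HF i)).
    unfold vadd, vscal, vsub. rewrite RtoC_inv by lra. field. intros E. apply RtoC_inj in E. lra. }
  assert (E2 : fst (CInt p 0 (2 * PI)) = 1).
  { unfold p. rewrite CInt_scalC; [|lra|intros; apply Rp].
    rewrite (kernel_formula (fun _ => RtoC 1) z zeta r Hr Hz (fun w _ => cdiff_const (RtoC 1) w)).
    replace (RtoC (/ (2 * PI)) * (RtoC (2 * PI) * (RtoC 1 + zeta * (RtoC 1 - RtoC 1))))%C with (RtoC 1).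
    reflexivity. rewrite RtoC_inv by lra. field. intros E. apply RtoC_inj in E. lra. }
  rewrite E1, E2 in Main. exact Main.
Qed.

Theorem lemma13p2 (n : nat) (N : Cn n -> R) (f : C -> Cn n) :
  is_norm N ->
  holomorphic_on_disc f ->
  (forall w, in_disc w -> N (f w) <= 1) ->
  forall z zeta : C,
    in_disc z -> z <> 0%C ->
    Cmod zeta <= (1 - Cmod z) / (2 * Cmod z) ->
    N (vadd (f 0%C) (vscal zeta (vsub (f z) (f 0%C)))) <= 1.
Proof.
  intros HN Hhol Hf1 z zeta Hz Hz0 Hzeta. unfold in_disc in *.
  pose proof HN as [Hpos [_ [Hs Ht]]].
  assert (Hzp : 0 < Cmod z) by (apply Cmod_gt_0; auto).
  set (u := vsub (f z) (f 0%C)).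
  set (T := N (vadd (f 0%C) (vscal zeta u))).
  apply Rnot_lt_le. intros HT.
  set (Mu := Cmod zeta * N u + 1).
  assert (HMu : 0 < Mu) by (unfold Mu; pose proof (Cmod_ge_0 zeta); pose proof (Hpos u); nra).
  set (tt := Rmin ((1 - Cmod z) / 2) ((T - 1) * (1 - Cmod z) / (2 * Mu))).
  assert (Htt : 0 < tt) by (apply Rmin_pos; apply Rdiv_lt_0_compat; nra).
  assert (Htt1 : tt <= (1 - Cmod z) / 2) by apply Rmin_l.
  assert (Htt2 : tt <= (T - 1) * (1 - Cmod z) / (2 * Mu)) by apply Rmin_r.
  set (r := 1 - tt).
  set (lam := (r - Cmod z) / (1 - Cmod z)).
  assert (Hlam : 0 < lam) by (apply Rdiv_lt_0_compat; unfold r; lra).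
  set (zr := (RtoC lam * zeta)%C).
  assert (Hclaim : N (vadd (f 0%C) (vscal zr u)) <= 1).
  { apply claim_r with (r := r); auto.
    - intros i w Hw. apply cdiff_of_ex_derive. apply Hhol. unfold in_disc. unfold r in Hw; lra.
    - intros w Hw. apply Hf1. unfold r in Hw; lra.
    - unfold r; lra.
    - unfold r; lra.
    - unfold zr. rewrite Cmod_RtoC_mult, Rabs_right by lra.
      apply (Rmult_le_compat_l (Cmod z)) in Hzeta; [|lra].
      replace (Cmod z * ((1 - Cmod z) / (2 * Cmod z))) with ((1 - Cmod z) / 2) in Hzeta by (field; lra).
      unfold lam. replace ((r - Cmod z) / (1 - Cmod z) * Cmod zeta * Cmod z) with
        ((r - Cmod z) / (1 - Cmod z) * (Cmod z * Cmod zeta)) by ring.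
      apply Rle_trans with ((r - Cmod z) / (1 - Cmod z) * ((1 - Cmod z) / 2)).
      apply Rmult_le_compat_l; [left; auto|lra].
      right. field. lra. }
  assert (Hdec : vadd (f 0%C) (vscal zeta u) = vadd (vadd (f 0%C) (vscal zr u)) (vscal (RtoC (1 - lam) * zeta) u)).
  { apply functional_extensionality; intros i. unfold vadd, vscal, zr. rewrite RtoC_minus. ring. }
  assert (H1l : 1 - lam = tt / (1 - Cmod z)) by (unfold lam, r; field; lra).
  assert (H1l0 : 0 <= 1 - lam) by (rewrite H1l; apply Rdiv_le_0_compat; lra).
  assert (HT2 : T <= 1 + (1 - lam) * (Cmod zeta * N u)).
  { unfold T. rewrite Hdec. eapply Rle_trans. apply Ht. rewrite Hs, Cmod_mult, Cmod_R, Rabs_right by lra.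
    rewrite <- Rmult_assoc. lra. }
  assert (HT3 : (1 - lam) * (Cmod zeta * N u) <= (T - 1) / 2).
  { rewrite H1l. apply Rle_trans with (tt / (1 - Cmod z) * Mu).
    apply Rmult_le_compat_l. apply Rdiv_le_0_compat; lra. unfold Mu; lra.
    apply (Rmult_le_compat_r (Mu / (1 - Cmod z))) in Htt2; [|apply Rdiv_le_0_compat; lra].
    replace ((T - 1) * (1 - Cmod z) / (2 * Mu) * (Mu / (1 - Cmod z))) with ((T - 1) / 2) in Htt2 by (field; lra).
    replace (tt / (1 - Cmod z) * Mu) with (tt * (Mu / (1 - Cmod z))) by (field; lra). lra. }
  lra.
Qed.
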